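(* There exists a universal constant $L'>1$ satisfying the following. Let $M$ be a $C^{1,1}$ $2$-manifold in $\mathbb{R}^3$ and let $p_0$ be an $\mathbb{H}$-regular point of $M$. Then there exist $\epsilon>0$ and an $L'$-bi-Lipschitz map $G:[-\epsilon,\epsilon]^2\to(M,|\cdot|)$ (Euclidean metrics on both sides) such that (1) $G(0,0)=p_0$, and (2) for all $v\in[-\epsilon,\epsilon]$, the curve $u\mapsto G(u,v)$ is a horizontal curve.
   Context: On $\mathbb{R}^3$ let $X=\partial_x-\tfrac12y\partial_z$, $Y=\partial_y+\tfrac12x\partial_z$, and $H_p=\mathrm{span}\{X(p),Y(p)\}$. A point $p$ of a $C^{1,1}$ $2$-manifold $M$ is characteristic if $T_pM=H_p$ and $\mathbb{H}$-regular otherwise. An absolutely continuous curve $(x(t),y(t),z(t))$ is horizontal if $z'+\tfrac12x'y-\tfrac12xy'=0$ almost everywhere. A map is $L'$-bi-Lipschitz if $L'^{-1}|a-b|\le|G(a)-G(b)|\le L'|a-b|$. *)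

(* Defs.v *)
From Stdlib Require Import Reals Lra List.
Import ListNotations.
Open Scope R_scope.

Definition R3 : Type := (R * R * R)%type.
Definition mk3 (x y z : R) : R3 := (x, y, z).
Definition px (p : R3) : R := fst (fst p).
Definition py (p : R3) : R := snd (fst p).
Definition pz (p : R3) : R := snd p.

Definition add3 (p q : R3) : R3 := mk3 (px p + px q) (py p + py q) (pz p + pz q).
Definition scal3 (a : R) (p : R3) : R3 := mk3 (a * px p) (a * py p) (a * pz p).
Definition dot3 (p q : R3) : R := px p * px q + py p * py q + pz p * pz q.
Definition norm3 (p : R3) : R := sqrt (dot3 p p).
Definition dist3 (p q : R3) : R :=
  sqrt ((px p - px q)^2 + (py p - py q)^2 + (pz p - pz q)^2).
Definition dist2 (a b : R * R) : R :=
  sqrt ((fst a - fst b)^2 + (snd a - snd b)^2).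

Definition has_gradient (f : R3 -> R) (p g : R3) : Prop :=
  forall eps, 0 < eps -> exists delta, 0 < delta /\
    forall h : R3, norm3 h < delta ->
      Rabs (f (add3 p h) - f p - dot3 g h) <= eps * norm3 h.

(** M (a subset of R^3) is an embedded C^{1,1} 2-manifold: locally near each of
    its points it is the zero set of a C^{1,1} function (differentiable with
    Lipschitz gradient) with nonvanishing gradient. *)
Definition C11_surface (M : R3 -> Prop) : Prop :=
  forall p, M p -> exists r, 0 < r /\ exists (f : R3 -> R) (g : R3 -> R3),
    (forall q, dist3 q p < r -> has_gradient f q (g q) /\ g q <> mk3 0 0 0) /\
    (exists K, forall q q', dist3 q p < r -> dist3 q' p < r ->
        dist3 (g q) (g q') <= K * dist3 q q') /\
    (forall q, dist3 q p < r -> (M q <-> f q = 0)).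

Definition tangent_space (M : R3 -> Prop) (p : R3) (v : R3) : Prop :=
  exists (gam : R -> R3) (delta : R), 0 < delta /\ gam 0 = p /\
    (forall t, Rabs t < delta -> M (gam t)) /\
    derivable_pt_lim (fun t => px (gam t)) 0 (px v) /\
    derivable_pt_lim (fun t => py (gam t)) 0 (py v) /\
    derivable_pt_lim (fun t => pz (gam t)) 0 (pz v).

Definition Xf (p : R3) : R3 := mk3 1 0 (- (py p) / 2).
Definition Yf (p : R3) : R3 := mk3 0 1 (px p / 2).
Definition Hplane (p : R3) (v : R3) : Prop :=
  exists a b : R, v = add3 (scal3 a (Xf p)) (scal3 b (Yf p)).

Definition characteristic (M : R3 -> Prop) (p : R3) : Prop :=
  M p /\ (forall v, tangent_space M p v <-> Hplane p v).
Definition H_regular (M : R3 -> Prop) (p : R3) : Prop :=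
  M p /\ ~ characteristic M p.

Definition null_set (N : R -> Prop) : Prop :=
  forall eps, 0 < eps -> exists c d : nat -> R,
    (forall n, c n <= d n) /\
    (forall t, N t -> exists n, c n < t < d n) /\
    (forall n, sum_f_R0 (fun k => d k - c k) n <= eps).

Fixpoint ordered_intervals (a : R) (l : list (R * R)) (b : R) : Prop :=
  match l with
  | nil => a <= b
  | (s, t) :: l' => a <= s /\ s <= t /\ ordered_intervals t l' b
  end.
Fixpoint total_length (l : list (R * R)) : R :=
  match l with nil => 0 | (s, t) :: l' => (t - s) + total_length l' end.
Fixpoint total_variation (gam : R -> R3) (l : list (R * R)) : R :=
  match l with nil => 0 | (s, t) :: l' => dist3 (gam t) (gam s) + total_variation gam l' end.

Definition abs_continuous_on (a b : R) (gam : R -> R3) : Prop :=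
  forall eps, 0 < eps -> exists delta, 0 < delta /\
    forall l, ordered_intervals a l b -> total_length l < delta ->
      total_variation gam l < eps.

Definition horizontal_curve (a b : R) (gam : R -> R3) : Prop :=
  abs_continuous_on a b gam /\
  null_set (fun t => a <= t <= b /\
    ~ (exists dx dy dz : R,
         derivable_pt_lim (fun s => px (gam s)) t dx /\
         derivable_pt_lim (fun s => py (gam s)) t dy /\
         derivable_pt_lim (fun s => pz (gam s)) t dz /\
         dz + / 2 * dx * py (gam t) - / 2 * px (gam t) * dy = 0)).

Definition in_square (e : R) (a : R * R) : Prop :=
  - e <= fst a <= e /\ - e <= snd a <= e.
Definition bi_lipschitz_on_square (L e : R) (G : R * R -> R3) : Prop :=
  forall a b, in_square e a -> in_square e b ->
    / L * dist2 a b <= dist3 (G a) (G b) /\ dist3 (G a) (G b) <= L * dist2 a b.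

(* Main.v *)
Require Import Defs.
From Stdlib Require Import Reals Lra Psatz.
From Coquelicot Require Import Coquelicot.
Open Scope R_scope.

Ltac absr := unfold Rabs in *; repeat match goal with
  | |- context [Rcase_abs ?x] => destruct (Rcase_abs x)
  | H : context [Rcase_abs ?x] |- _ => destruct (Rcase_abs x) end; try lra.

Definition sub3 (p q : R3) : R3 := mk3 (px p - px q) (py p - py q) (pz p - pz q).
Definition n1 (p : R3) : R := Rabs (px p) + Rabs (py p) + Rabs (pz p).
Definition d1 (p q : R3) : R := n1 (sub3 p q).
Definition cross (a b : R3) : R3 :=
  mk3 (py a * pz b - pz a * py b) (pz a * px b - px a * pz b) (px a * py b - py a * px b).
Definition zero3 : R3 := mk3 0 0 0.

Lemma eq3 (a b : R3) : px a = px b -> py a = py b -> pz a = pz b -> a = b.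
Proof. destruct a as [[a1 a2] a3], b as [[b1 b2] b3]; unfold px, py, pz; simpl; intros; subst; auto. Qed.

Ltac s3 := unfold d1, n1, sub3, add3, scal3, dot3, cross, zero3, mk3, px, py, pz in *; simpl in *.

Lemma n1_ge0 p : 0 <= n1 p.
Proof. unfold n1; pose proof (Rabs_pos (px p)); pose proof (Rabs_pos (py p)); pose proof (Rabs_pos (pz p)); lra. Qed.
Lemma d1_ge0 p q : 0 <= d1 p q.
Proof. apply n1_ge0. Qed.
Lemma d1_sym p q : d1 p q = d1 q p.
Proof. s3. absr. Qed.
Lemma d1_tri p q w : d1 p w <= d1 p q + d1 q w.
Proof. s3. absr. Qed.
Lemma d1_refl p : d1 p p = 0.
Proof. s3. absr. Qed.
Lemma d1_eq0 p q : d1 p q <= 0 -> p = q.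
Proof. intros H; apply eq3; s3; absr. Qed.
Lemma n1_add a b : n1 (add3 a b) <= n1 a + n1 b.
Proof. s3. absr. Qed.
Lemma n1_scal c a : n1 (scal3 c a) = Rabs c * n1 a.
Proof. s3. rewrite !Rabs_mult. ring. Qed.
Lemma n1_sub a b : n1 (sub3 a b) <= n1 a + n1 b.
Proof. s3. absr. Qed.
Lemma dot_bound a b : Rabs (dot3 a b) <= n1 a * n1 b.
Proof.
  s3. destruct a as [[a1 a2] a3], b as [[b1 b2] b3]; simpl.
  eapply Rle_trans. apply Rabs_triang. eapply Rle_trans. apply Rplus_le_compat_r. apply Rabs_triang.
  rewrite !Rabs_mult.
  pose proof (Rabs_pos a1); pose proof (Rabs_pos a2); pose proof (Rabs_pos a3);
  pose proof (Rabs_pos b1); pose proof (Rabs_pos b2); pose proof (Rabs_pos b3). nra.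
Qed.
Lemma cross_bound a b : n1 (cross a b) <= n1 a * n1 b.
Proof.
  s3. destruct a as [[a1 a2] a3], b as [[b1 b2] b3]; simpl.
  assert (forall x y z w, Rabs (x*y - z*w) <= Rabs x * Rabs y + Rabs z * Rabs w).
  { intros. rewrite <- !Rabs_mult. unfold Rminus. eapply Rle_trans. apply Rabs_triang. rewrite Rabs_Ropp. lra. }
  pose proof (H a2 b3 a3 b2); pose proof (H a3 b1 a1 b3); pose proof (H a1 b2 a2 b1).
  pose proof (Rabs_pos a1); pose proof (Rabs_pos a2); pose proof (Rabs_pos a3);
  pose proof (Rabs_pos b1); pose proof (Rabs_pos b2); pose proof (Rabs_pos b3). nra.
Qed.

Lemma sqr_abs_eq x : x * x = Rabs x * Rabs x.
Proof. pose proof (Rsqr_abs x). unfold Rsqr in H. exact H. Qed.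

Lemma norm3_le_n1 a : norm3 a <= n1 a.
Proof.
  unfold norm3. apply Rsqr_incr_0_var. 2: apply n1_ge0.
  rewrite Rsqr_sqrt. 2: unfold dot3; nra.
  unfold Rsqr, dot3, n1. pose proof (Rabs_pos (px a)); pose proof (Rabs_pos (py a)); pose proof (Rabs_pos (pz a)).
  rewrite (sqr_abs_eq (px a)), (sqr_abs_eq (py a)), (sqr_abs_eq (pz a)). nra.
Qed.

Lemma n1_le_2norm3 a : n1 a <= 2 * norm3 a.
Proof.
  unfold norm3. apply Rsqr_incr_0_var.
  2: { pose proof (sqrt_pos (dot3 a a)); lra. }
  unfold Rsqr. replace (2 * sqrt (dot3 a a) * (2 * sqrt (dot3 a a))) with (4 * (sqrt (dot3 a a) * sqrt (dot3 a a))) by ring.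
  rewrite sqrt_sqrt. 2: unfold dot3; nra.
  unfold dot3, n1. pose proof (Rabs_pos (px a)); pose proof (Rabs_pos (py a)); pose proof (Rabs_pos (pz a)).
  rewrite (sqr_abs_eq (px a)), (sqr_abs_eq (py a)), (sqr_abs_eq (pz a)).
  set (x := Rabs (px a)) in *; set (y := Rabs (py a)) in *; set (z := Rabs (pz a)) in *.
  pose proof (Rle_0_sqr (x - y)); pose proof (Rle_0_sqr (y - z)); pose proof (Rle_0_sqr (x - z)).
  unfold Rsqr in *. nra.
Qed.

Lemma dist3_norm p q : dist3 p q = norm3 (sub3 p q).
Proof. unfold dist3, norm3. s3. apply f_equal. ring. Qed.

Lemma dist3_le_d1 p q : dist3 p q <= d1 p q.
Proof. rewrite dist3_norm. apply norm3_le_n1. Qed.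
Lemma d1_le_dist3 p q : d1 p q <= 2 * dist3 p q.
Proof. rewrite dist3_norm. apply n1_le_2norm3. Qed.
Arguments px _ /. Arguments py _ /. Arguments pz _ /. Arguments mk3 _ _ _ /.


Definition Lip1 (h : R -> R3) (L : R) := forall s s', d1 (h s) (h s') <= L * Rabs (s - s').

Lemma lip_cont (phi : R -> R) L : (forall s s', Rabs (phi s - phi s') <= L * Rabs (s - s')) ->
  forall x, continuous phi x.
Proof.
  intros H x. apply continuity_pt_filterlim.
  intros eps Heps. exists (eps / (Rabs L + 1)). split.
  { apply Rdiv_lt_0_compat; auto. pose proof (Rabs_pos L); lra. }
  intros y [_ Hy]. simpl in *. unfold R_dist in *.
  eapply Rle_lt_trans. apply H.
  pose proof (Rabs_pos L). pose proof (Rabs_pos (y - x)).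
  assert (L <= Rabs L) by apply RRle_abs.
  apply Rle_lt_trans with (Rabs L * Rabs (y - x)). nra.
  apply Rle_lt_trans with ((Rabs L + 1) * Rabs (y - x)). nra.
  replace eps with ((Rabs L + 1) * (eps / (Rabs L + 1))) by (field; lra).
  apply Rmult_lt_compat_l; lra.
Qed.

Lemma lip_px h L : Lip1 h L -> forall x, continuous (fun s => px (h s)) x.
Proof. intro H; apply lip_cont with L. intros s s'; eapply Rle_trans; [|apply H]. s3. absr. Qed.
Lemma lip_py h L : Lip1 h L -> forall x, continuous (fun s => py (h s)) x.
Proof. intro H; apply lip_cont with L. intros s s'; eapply Rle_trans; [|apply H]. s3. absr. Qed.
Lemma lip_pz h L : Lip1 h L -> forall x, continuous (fun s => pz (h s)) x.
Proof. intro H; apply lip_cont with L. intros s s'; eapply Rle_trans; [|apply H]. s3. absr. Qed.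

Lemma ex_cont (phi : R -> R) a b : (forall x, continuous phi x) -> ex_RInt phi a b.
Proof. intros H; apply (@ex_RInt_continuous R_CompleteNormedModule); intros; apply H. Qed.

Definition int3 (h : R -> R3) a b : R3 :=
  mk3 (RInt (fun s => px (h s)) a b) (RInt (fun s => py (h s)) a b) (RInt (fun s => pz (h s)) a b).

Lemma RInt_sub_R (f g : R -> R) a b : (forall x, continuous f x) -> (forall x, continuous g x) ->
  RInt f a b - RInt g a b = RInt (fun x => f x - g x) a b.
Proof.
  intros Hf Hg. pose proof (RInt_minus f g a b (ex_cont f a b Hf) (ex_cont g a b Hg)).
  unfold minus, plus, opp in H; simpl in H. exact (eq_sym H).
Qed.

Lemma RInt_plus_R (f g : R -> R) a b : (forall x, continuous f x) -> (forall x, continuous g x) ->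
  RInt f a b + RInt g a b = RInt (fun x => f x + g x) a b.
Proof.
  intros Hf Hg. pose proof (RInt_plus f g a b (ex_cont f a b Hf) (ex_cont g a b Hg)).
  unfold plus in H; simpl in H. exact (eq_sym H).
Qed.

Lemma RInt_chasles_R (f : R -> R) a b c : (forall x, continuous f x) ->
  RInt f a c - RInt f a b = RInt f b c.
Proof.
  intros Hf. rewrite <- (RInt_Chasles f a b c (ex_cont f a b Hf) (ex_cont f b c Hf)).
  unfold plus; simpl. ring.
Qed.

Lemma RInt_swap_R (f : R -> R) a b : (forall x, continuous f x) -> RInt f b a = - RInt f a b.
Proof. intros Hf. rewrite <- (opp_RInt_swap f a b (ex_cont f a b Hf)). reflexivity. Qed.

Lemma int3_sub h1 h2 L1 L2 a b : Lip1 h1 L1 -> Lip1 h2 L2 ->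
  sub3 (int3 h1 a b) (int3 h2 a b) = int3 (fun s => sub3 (h1 s) (h2 s)) a b.
Proof.
  intros H1 H2. apply eq3; unfold int3, sub3, mk3, px, py, pz; simpl.
  - apply (RInt_sub_R (fun s => fst (fst (h1 s))) (fun s => fst (fst (h2 s)))); [eapply lip_px|eapply lip_px]; eauto.
  - apply (RInt_sub_R (fun s => snd (fst (h1 s))) (fun s => snd (fst (h2 s)))); [eapply lip_py|eapply lip_py]; eauto.
  - apply (RInt_sub_R (fun s => snd (h1 s)) (fun s => snd (h2 s))); [eapply lip_pz|eapply lip_pz]; eauto.
Qed.

Lemma int3_chasles h L a b c : Lip1 h L -> sub3 (int3 h a c) (int3 h a b) = int3 h b c.
Proof.
  intros H. apply eq3; unfold int3, sub3; simpl; apply RInt_chasles_R;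
  first [eapply lip_px | eapply lip_py | eapply lip_pz]; eauto.
Qed.

Lemma int3_const c a b : int3 (fun _ => c) a b = scal3 (b - a) c.
Proof. apply eq3; unfold int3, scal3, mk3, px, py, pz; simpl; rewrite RInt_const; reflexivity. Qed.

Lemma int3_point h a : int3 h a a = zero3.
Proof. apply eq3; unfold int3, zero3, mk3, px, py, pz; simpl; rewrite RInt_point; reflexivity. Qed.

Lemma RInt_abs_bound (f : R -> R) a b : a <= b -> (forall x, continuous f x) ->
  Rabs (RInt f a b) <= RInt (fun t => Rabs (f t)) a b.
Proof. intros. apply abs_RInt_le; auto. apply ex_cont; auto. Qed.

Lemma cont_abs (f : R -> R) : (forall x, continuous f x) -> forall x, continuous (fun t => Rabs (f t)) x.
Proof. intros H x. apply continuous_comp; auto. apply continuous_Rabs. Qed.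

Lemma int3_bound_pos h L a b M : a <= b -> Lip1 h L -> (forall x, a <= x <= b -> n1 (h x) <= M) ->
  n1 (int3 h a b) <= (b - a) * M.
Proof.
  intros Hab H HM. pose proof (lip_px h L H) as C1; pose proof (lip_py h L H) as C2; pose proof (lip_pz h L H) as C3.
  unfold n1, int3; simpl.
  pose proof (RInt_abs_bound _ a b Hab C1). pose proof (RInt_abs_bound _ a b Hab C2). pose proof (RInt_abs_bound _ a b Hab C3).
  pose proof (cont_abs _ C1); pose proof (cont_abs _ C2); pose proof (cont_abs _ C3).
  assert (RInt (fun t => Rabs (px (h t))) a b + RInt (fun t => Rabs (py (h t))) a b + RInt (fun t => Rabs (pz (h t))) a b
    = RInt (fun t => n1 (h t)) a b).
  { rewrite (RInt_plus_R (fun t => Rabs (px (h t))) (fun t => Rabs (py (h t))) a b H3 H4).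
    rewrite (RInt_plus_R (fun t => Rabs (px (h t)) + Rabs (py (h t))) (fun t => Rabs (pz (h t)))). reflexivity. 2: auto.
    intro x. apply (continuous_plus (fun t => Rabs (px (h t))) (fun t => Rabs (py (h t)))); auto. }
  assert (RInt (fun t => n1 (h t)) a b <= RInt (fun _ => M) a b).
  { apply RInt_le; auto. apply ex_cont. intro x. unfold n1.
    apply (continuous_plus (fun t => Rabs (px (h t)) + Rabs (py (h t))) (fun t => Rabs (pz (h t)))); auto.
    apply (continuous_plus (fun t => Rabs (px (h t))) (fun t => Rabs (py (h t)))); auto.
    apply ex_RInt_const. intros; apply HM; lra. }
  rewrite RInt_const in H7. unfold scal in H7; simpl in H7; unfold mult in H7; simpl in H7. unfold px, py, pz, mk3 in *; simpl in *. lra.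
Qed.

Lemma int3_bound h L a b M : Lip1 h L -> (forall x, Rmin a b <= x <= Rmax a b -> n1 (h x) <= M) ->
  n1 (int3 h a b) <= Rabs (b - a) * M.
Proof.
  intros H HM. destruct (Rle_dec a b).
  - rewrite Rabs_right by lra. apply int3_bound_pos with L; auto.
    intros; apply HM; rewrite Rmin_left, Rmax_right; lra.
  - rewrite Rabs_left by lra.
    assert (n1 (int3 h a b) = n1 (int3 h b a)).
    { unfold n1, int3. rewrite (RInt_swap_R (fun s => px (h s)) b a), (RInt_swap_R (fun s => py (h s)) b a),
       (RInt_swap_R (fun s => pz (h s)) b a) by (first [eapply lip_px | eapply lip_py | eapply lip_pz]; eauto).
      simpl. rewrite !Rabs_Ropp; reflexivity. }
    rewrite H0. replace (- (b - a)) with (a - b) by ring. apply int3_bound_pos with L; auto. lra.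
    intros; apply HM; rewrite Rmin_right, Rmax_left; lra.
Qed.


Definition LB (p : R3) (r : R) (F : R3 -> R3) (K B : R) :=
  (forall q q', d1 q p < r -> d1 q' p < r -> d1 (F q) (F q') <= K * d1 q q') /\
  (forall q, d1 q p < r -> n1 (F q) <= B).

Definition clamp (T t : R) := Rmax (- T) (Rmin T t).

Lemma clamp_bound T t : 0 <= T -> Rabs (clamp T t) <= T.
Proof. intros. unfold clamp, Rmax, Rmin. repeat destruct Rle_dec; absr. Qed.
Lemma clamp_lip T s t : 0 <= T -> Rabs (clamp T s - clamp T t) <= Rabs (s - t).
Proof. intros. unfold clamp, Rmax, Rmin. repeat destruct Rle_dec; absr. Qed.
Lemma clamp_id T t : Rabs t <= T -> clamp T t = t.
Proof. intros. unfold clamp, Rmax, Rmin. repeat destruct Rle_dec; absr. Qed.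

Fixpoint pic (F : R3 -> R3) (T : R) (q : R3) (n : nat) (t : R) : R3 :=
  match n with
  | O => q
  | S m => add3 q (int3 (fun s => F (pic F T q m (clamp T s))) 0 t)
  end.

Definition flow (F : R3 -> R3) (T : R) (q : R3) (t : R) : R3 :=
  mk3 (real (Lim_seq (fun n => px (pic F T q n t))))
      (real (Lim_seq (fun n => py (pic F T q n t))))
      (real (Lim_seq (fun n => pz (pic F T q n t)))).

Lemma sub3_add3 q a b : sub3 (add3 q a) (add3 q b) = sub3 a b.
Proof. apply eq3; s3; ring. Qed.
Lemma sub3_add3_q q a : sub3 (add3 q a) q = a.
Proof. apply eq3; s3; ring. Qed.
Lemma d1_add3 q a b : d1 (add3 q a) (add3 q b) = d1 a b.
Proof. unfold d1. rewrite sub3_add3. reflexivity. Qed.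
Lemma d1_add3_q q a : d1 (add3 q a) q = n1 a.
Proof. unfold d1. rewrite sub3_add3_q. reflexivity. Qed.

Lemma geo_cauchy (u : nat -> R) c : (forall n, Rabs (u (S n) - u n) <= c * (/2)^n) ->
  forall n m, (n <= m)%nat -> Rabs (u m - u n) <= 2 * c * (/2)^n - 2 * c * (/2)^m.
Proof.
  intros H n m Hnm. induction Hnm.
  - replace (u n - u n) with 0 by ring. rewrite Rabs_R0. lra.
  - replace (u (S m) - u n) with ((u (S m) - u m) + (u m - u n)) by ring.
    eapply Rle_trans. apply Rabs_triang. pose proof (H m). simpl. lra.
Qed.

Lemma small_pow (c e : R) : 0 < e -> exists n, c * (/2)^n < e.
Proof.
  intros He. destruct (Rle_dec c 0) as [Hc0|Hc0].
  - exists O. simpl. lra.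
  - destruct (pow_lt_1_zero (/2)) with (y := e / c) as [N HN].
    { rewrite Rabs_right; lra. } { apply Rdiv_lt_0_compat; lra. }
    exists N. specialize (HN N (le_n N)). rewrite Rabs_right in HN.
    2: { apply Rle_ge, pow_le; lra. }
    apply Rmult_lt_compat_l with (r := c) in HN; [|lra].
    replace (c * (e / c)) with e in HN by (field; lra). lra.
Qed.

Lemma le_geo x y c : (forall n, x <= y + c * (/2)^n) -> x <= y.
Proof.
  intros H. destruct (Rle_dec x y) as [Hxy|Hxy]; auto.
  destruct (small_pow c (x - y)) as [n Hn]; [lra|]. specialize (H n). lra.
Qed.

Lemma geo_lim (u : nat -> R) c : (forall n, Rabs (u (S n) - u n) <= c * (/2)^n) ->
  forall n, Rabs (real (Lim_seq u) - u n) <= 2 * c * (/2)^n.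
Proof.
  intros H.
  assert (Hc : 0 <= c). { specialize (H O). simpl in H. pose proof (Rabs_pos (u 1%nat - u 0%nat)). lra. }
  assert (Hex : ex_finite_lim_seq u).
  { apply ex_lim_seq_cauchy_corr. intros eps.
    destruct (small_pow (4 * c) eps) as [N HN]. apply cond_pos.
    exists N. intros n m Hn Hm.
    assert (forall k, (N <= k)%nat -> Rabs (u k - u N) <= 2 * c * (/2)^N).
    { intros k Hk. pose proof (geo_cauchy u c H N k Hk). pose proof (pow_le (/2) k ltac:(lra)). nra. }
    pose proof (H0 n Hn). pose proof (H0 m Hm).
    replace (u n - u m) with ((u n - u N) - (u m - u N)) by ring.
    absr. }
  pose proof (Lim_seq_correct' u Hex) as Hl. set (l := real (Lim_seq u)) in *.
  intros n.
  assert (Hb : forall k, Rabs (u (k + n)%nat - u n) <= 2 * c * (/2)^n).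
  { intros k. pose proof (geo_cauchy u c H n (k+n)%nat ltac:(lia)). pose proof (pow_le (/2) (k+n) ltac:(lra)). nra. }
  apply is_lim_seq_incr_n with (N := n) in Hl.
  assert (Rbar_le l (u n + 2 * c * (/2)^n)).
  { apply (is_lim_seq_le (fun k => u (k + n)%nat) (fun _ => u n + 2 * c * (/2)^n) l). intros k. specialize (Hb k). absr.
    auto. apply is_lim_seq_const. }
  assert (Rbar_le (u n - 2 * c * (/2)^n) l).
  { apply (is_lim_seq_le (fun _ => u n - 2 * c * (/2)^n) (fun k => u (k + n)%nat) _ l). intros k. specialize (Hb k). absr.
    apply is_lim_seq_const. auto. }
  simpl in *. absr.
Qed.


Lemma rtri2 a b c d : Rabs ((a - b) - (c - d)) <= Rabs (a - c) + Rabs (b - d).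
Proof. absr. Qed.
Lemma d1_subsub a b a' b' : d1 (sub3 a b) (sub3 a' b') <= d1 a a' + d1 b b'.
Proof. s3. pose proof (rtri2 (fst (fst a)) (fst (fst b)) (fst (fst a')) (fst (fst b'))).
  pose proof (rtri2 (snd (fst a)) (snd (fst b)) (snd (fst a')) (snd (fst b'))).
  pose proof (rtri2 (snd a) (snd b) (snd a') (snd b')). lra. Qed.
Lemma d1_scal c x y : d1 (scal3 c x) (scal3 c y) = Rabs c * d1 x y.
Proof. s3. replace (c * fst (fst x) - c * fst (fst y)) with (c * (fst (fst x) - fst (fst y))) by ring.
  replace (c * snd (fst x) - c * snd (fst y)) with (c * (snd (fst x) - snd (fst y))) by ring.
  replace (c * snd x - c * snd y) with (c * (snd x - snd y)) by ring. rewrite !Rabs_mult. ring. Qed.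
Lemma d1_flip a b : d1 a b = n1 (sub3 a b).
Proof. reflexivity. Qed.

Section ODE.
Variables (p : R3) (r : R) (F : R3 -> R3) (K B : R).
Hypotheses (Hr : 0 < r) (HK : 0 < K) (HB : 0 < B) (HLB : LB p r F K B).

Definition TT := Rmin (r / (2 * B)) (1 / (2 * K)).
Lemma TT_pos : 0 < TT.
Proof. unfold TT. apply Rmin_pos; apply Rdiv_lt_0_compat; lra. Qed.
Lemma TT_B : B * TT <= r / 2.
Proof. unfold TT. pose proof (Rmin_l (r / (2 * B)) (1 / (2 * K))).
  apply Rmult_le_compat_l with (r := B) in H; [|lra]. replace (B * (r / (2 * B))) with (r/2) in H by (field; lra). lra. Qed.
Lemma TT_K : K * TT <= / 2.
Proof. unfold TT. pose proof (Rmin_r (r / (2 * B)) (1 / (2 * K))).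
  apply Rmult_le_compat_l with (r := K) in H; [|lra]. replace (K * (1 / (2 * K))) with (/2) in H by (field; lra). lra. Qed.

Notation P q n := (pic F TT q n).

Lemma Flip q q' : d1 q p < r -> d1 q' p < r -> d1 (F q) (F q') <= K * d1 q q'.
Proof. apply HLB. Qed.
Lemma Fbnd q : d1 q p < r -> n1 (F q) <= B.
Proof. apply HLB. Qed.

Definition Inv q n := Lip1 (P q n) B /\ forall t, d1 (P q n t) q <= B * Rabs t.

Lemma inball q n s : d1 q p < r / 2 -> Inv q n -> d1 (P q n (clamp TT s)) p < r.
Proof.
  intros Hq [_ H2]. pose proof (H2 (clamp TT s)). pose proof (clamp_bound TT s (Rlt_le _ _ TT_pos)).
  pose proof TT_B. pose proof (d1_tri (P q n (clamp TT s)) q p).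
  assert (B * Rabs (clamp TT s) <= B * TT) by (apply Rmult_le_compat_l; lra). lra.
Qed.

Lemma H_lip q n : d1 q p < r / 2 -> Inv q n -> Lip1 (fun s => F (P q n (clamp TT s))) (K * B).
Proof.
  intros Hq HI s s'. eapply Rle_trans. apply Flip; apply inball; auto.
  destruct HI as [H1 _]. pose proof (H1 (clamp TT s) (clamp TT s')).
  pose proof (clamp_lip TT s s' (Rlt_le _ _ TT_pos)).
  rewrite Rmult_assoc. apply Rmult_le_compat_l; [lra|]. nra.
Qed.

Lemma H_bnd q n s : d1 q p < r / 2 -> Inv q n -> n1 (F (P q n (clamp TT s))) <= B.
Proof. intros. apply Fbnd, inball; auto. Qed.

Lemma pic_S q n t : P q (S n) t = add3 q (int3 (fun s => F (P q n (clamp TT s))) 0 t).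
Proof. reflexivity. Qed.

Lemma inv_all q : d1 q p < r / 2 -> forall n, Inv q n.
Proof.
  intros Hq n. induction n.
  - split.
    + intros s s'. simpl. rewrite d1_refl. pose proof (Rabs_pos (s - s')). nra.
    + intros t. simpl. rewrite d1_refl. pose proof (Rabs_pos t). nra.
  - split.
    + intros s s'. rewrite !pic_S, d1_add3. unfold d1. rewrite (int3_chasles _ (K * B)) by (apply H_lip; auto).
      eapply Rle_trans. apply (int3_bound _ (K * B)). apply H_lip; auto. intros; apply H_bnd; auto.
      rewrite Rabs_minus_sym. lra.
    + intros t. rewrite pic_S, d1_add3_q.
      eapply Rle_trans. apply (int3_bound _ (K * B)). apply H_lip; auto. intros; apply H_bnd; auto.
      rewrite Rminus_0_r. lra.
Qed.

Lemma pic_incr q : d1 q p < r / 2 -> forall n t, Rabs t <= TT -> d1 (P q (S n) t) (P q n t) <= (r / 2) * (/2)^n.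
Proof.
  intros Hq n. induction n; intros t Ht.
  - simpl pic at 2. destruct (inv_all q Hq 1%nat) as [_ H2]. eapply Rle_trans. apply H2.
    pose proof TT_B. simpl. assert (B * Rabs t <= B * TT) by (apply Rmult_le_compat_l; lra). lra.
  - rewrite (pic_S q (S n)), (pic_S q n), d1_add3. unfold d1.
    rewrite (int3_sub _ _ (K * B) (K * B)) by (apply H_lip; auto; apply inv_all; auto).
    eapply Rle_trans. apply (int3_bound _ (K * B + K * B)).
    { intros s s'. eapply Rle_trans. apply d1_subsub. pose proof (H_lip q (S n) Hq (inv_all q Hq _) s s').
      pose proof (H_lip q n Hq (inv_all q Hq _) s s'). lra. }
    { intros x _. fold (d1 (F (P q (S n) (clamp TT x))) (F (P q n (clamp TT x)))).
      eapply Rle_trans. apply Flip; apply inball; auto; apply inv_all; auto.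
      apply Rmult_le_compat_l. lra. apply IHn. apply clamp_bound. pose proof TT_pos; lra. }
    rewrite Rminus_0_r. pose proof TT_K. simpl.
    assert (0 <= r / 2 * (/ 2) ^ n) by (apply Rmult_le_pos; [lra| apply pow_le; lra]).
    assert (Rabs t * K <= /2) by nra. nra.
Qed.

Definition FL q t := flow F TT q t.

Lemma flow_close q n t : d1 q p < r / 2 -> Rabs t <= TT -> d1 (FL q t) (P q n t) <= 3 * r * (/2)^n.
Proof.
  intros Hq Ht. unfold FL, flow, d1, n1, sub3. simpl.
  assert (forall (g : R3 -> R), (forall a b, Rabs (g a - g b) <= d1 a b) ->
    Rabs (real (Lim_seq (fun k => g (P q k t))) - g (P q n t)) <= r * (/2)^n).
  { intros g Hg. replace (r * (/2)^n) with (2 * (r/2) * (/2)^n) by field.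
    apply (geo_lim (fun k => g (P q k t))). intros k. eapply Rle_trans. apply Hg. apply pic_incr; auto. }
  pose proof (H (fun a => px a) ltac:(intros; s3; absr)).
  pose proof (H (fun a => py a) ltac:(intros; s3; absr)).
  pose proof (H (fun a => pz a) ltac:(intros; s3; absr)). simpl in *. lra.
Qed.

Lemma FL_q q t : d1 q p < r / 2 -> Rabs t <= TT -> d1 (FL q t) q <= B * Rabs t.
Proof.
  intros Hq Ht. apply le_geo with (c := 3 * r). intros n.
  pose proof (flow_close q n t Hq Ht). destruct (inv_all q Hq n) as [_ H2]. pose proof (H2 t).
  pose proof (d1_tri (FL q t) (P q n t) q). lra.
Qed.

Lemma FL_0 q : d1 q p < r / 2 -> FL q 0 = q.
Proof.
  intros Hq. apply d1_eq0. pose proof (FL_q q 0 Hq). rewrite Rabs_R0 in *. pose proof TT_pos.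
  assert (d1 (FL q 0) q <= B * 0) by (apply H; lra). lra.
Qed.

Lemma FL_lip q s t : d1 q p < r / 2 -> Rabs s <= TT -> Rabs t <= TT -> d1 (FL q s) (FL q t) <= B * Rabs (s - t).
Proof.
  intros Hq Hs Ht. apply le_geo with (c := 6 * r). intros n.
  pose proof (flow_close q n s Hq Hs). pose proof (flow_close q n t Hq Ht).
  destruct (inv_all q Hq n) as [H1 _]. pose proof (H1 s t).
  pose proof (d1_tri (FL q s) (P q n s) (FL q t)). pose proof (d1_tri (P q n s) (P q n t) (FL q t)).
  pose proof (d1_sym (P q n t) (FL q t)). lra.
Qed.

Lemma FL_ball q t : d1 q p < r / 2 -> Rabs t <= TT -> d1 (FL q t) p < r.
Proof.
  intros Hq Ht. pose proof (FL_q q t Hq Ht). pose proof TT_B. pose proof (d1_tri (FL q t) q p).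
  assert (B * Rabs t <= B * TT) by (apply Rmult_le_compat_l; lra). lra.
Qed.

Lemma n1_le_tri X Y : n1 X <= n1 Y + d1 X Y.
Proof. s3. absr. Qed.

Lemma lip_const (c : R3) : Lip1 (fun _ => c) 0.
Proof. intros s s'. rewrite d1_refl. lra. Qed.

Lemma pic_quad q n s t : d1 q p < r / 2 -> Rabs s <= TT -> Rabs t <= TT ->
  d1 (sub3 (P q (S n) s) (P q (S n) t)) (scal3 (s - t) (F (P q n t))) <= K * B * ((s - t) * (s - t)).
Proof.
  intros Hq Hs Ht. rewrite !pic_S, sub3_add3, (int3_chasles _ (K * B)) by (apply H_lip; auto; apply inv_all; auto).
  rewrite <- int3_const. unfold d1. rewrite (int3_sub _ _ (K * B) 0) by (auto using lip_const; apply H_lip; auto; apply inv_all; auto).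
  eapply Rle_trans. apply (int3_bound _ (K * B + 0) _ _ (K * B * Rabs (s - t))).
  { intros u u'. eapply Rle_trans. apply d1_subsub. rewrite d1_refl. pose proof (H_lip q n Hq (inv_all q Hq _) u u'). lra. }
  { intros x Hx. assert (Rabs x <= TT).
    { unfold Rmin, Rmax in Hx. destruct Rle_dec; absr. }
    fold (d1 (F (P q n (clamp TT x))) (F (P q n t))).
    pose proof (inball q n x Hq (inv_all q Hq n)). pose proof (inball q n t Hq (inv_all q Hq n)).
    rewrite clamp_id in * by auto.
    eapply Rle_trans. apply Flip; auto. destruct (inv_all q Hq n) as [HL1 _]. pose proof (HL1 x t).
    assert (Rabs (x - t) <= Rabs (s - t)). { unfold Rmin, Rmax in Hx. destruct Rle_dec; absr. }
    rewrite Rmult_assoc. apply Rmult_le_compat_l; [lra|]. nra. }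
  rewrite (sqr_abs_eq (s - t)). lra.
Qed.

Lemma FL_quad q s t : d1 q p < r / 2 -> Rabs s <= TT -> Rabs t <= TT ->
  d1 (sub3 (FL q s) (FL q t)) (scal3 (s - t) (F (FL q t))) <= K * B * ((s - t) * (s - t)).
Proof.
  intros Hq Hs Ht. apply le_geo with (c := 9 * r). intros n.
  pose proof (pic_quad q n s t Hq Hs Ht).
  pose proof (d1_tri (sub3 (FL q s) (FL q t)) (sub3 (P q (S n) s) (P q (S n) t)) (scal3 (s - t) (F (FL q t)))).
  pose proof (d1_tri (sub3 (P q (S n) s) (P q (S n) t)) (scal3 (s - t) (F (P q n t))) (scal3 (s - t) (F (FL q t)))).
  pose proof (d1_subsub (FL q s) (FL q t) (P q (S n) s) (P q (S n) t)).
  pose proof (flow_close q (S n) s Hq Hs). pose proof (flow_close q (S n) t Hq Ht).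
  pose proof (flow_close q n t Hq Ht).
  rewrite d1_scal in H1.
  assert (d1 (F (P q n t)) (F (FL q t)) <= K * d1 (P q n t) (FL q t)).
  { apply Flip. rewrite <- (clamp_id TT t) at 1 by auto. apply inball; auto. apply inv_all; auto.
    apply FL_ball; auto. }
  pose proof (d1_sym (FL q t) (P q n t)). replace ((/2)^(S n)) with (/2 * (/2)^n) in H3, H4 by reflexivity.
  assert (Rabs (s - t) <= 2 * TT) by absr. pose proof TT_K.
  assert (0 <= (/2)^n) by (apply pow_le; lra).
  pose proof (d1_ge0 (P q n t) (FL q t)). pose proof (Rabs_pos (s - t)).
  assert (Rabs (s - t) * (K * d1 (P q n t) (FL q t)) <= 3 * r * (/2)^n).
  { assert (0 <= 3 * r * (/ 2) ^ n) by (apply Rmult_le_pos; lra).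
    apply Rle_trans with (2 * TT * K * (3 * r * (/ 2) ^ n)).
    2: { assert (2 * TT * K <= 1) by lra. 
         apply Rle_trans with (1 * (3 * r * (/ 2) ^ n)); [|lra]. apply Rmult_le_compat_r; lra. }
    apply Rle_trans with (Rabs (s - t) * (K * (3 * r * (/ 2) ^ n))). apply Rmult_le_compat_l; auto.
    apply Rmult_le_compat_l; lra. replace (2 * TT * K * (3 * r * (/ 2) ^ n)) with (2 * TT * (K * (3 * r * (/ 2) ^ n))) by ring. apply Rmult_le_compat_r; [apply Rmult_le_pos|]; lra. }
  assert (Rabs (s - t) * d1 (F (P q n t)) (F (FL q t)) <= Rabs (s - t) * (K * d1 (P q n t) (FL q t))).
  { apply Rmult_le_compat_l; auto. }
  lra.
Qed.

Lemma pic_dep q q' n t : d1 q p < r / 2 -> d1 q' p < r / 2 -> Rabs t <= TT ->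
  d1 (sub3 (P q n t) (P q' n t)) (sub3 q q') <= 2 * K * Rabs t * d1 q q'.
Proof.
  intros Hq Hq'. revert t. induction n; intros t Ht.
  - change (P q 0 t) with q. change (P q' 0 t) with q'. rewrite d1_refl. pose proof (Rabs_pos t). pose proof (d1_ge0 q q'). assert (0 <= K * Rabs t * d1 q q') by (apply Rmult_le_pos; [apply Rmult_le_pos|]; lra). lra.
  - rewrite !pic_S. unfold d1 at 1.
    replace (sub3 (sub3 (add3 q (int3 (fun s => F (P q n (clamp TT s))) 0 t))
        (add3 q' (int3 (fun s => F (P q' n (clamp TT s))) 0 t))) (sub3 q q'))
      with (sub3 (int3 (fun s => F (P q n (clamp TT s))) 0 t) (int3 (fun s => F (P q' n (clamp TT s))) 0 t))
      by (apply eq3; s3; ring).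
    rewrite (int3_sub _ _ (K * B) (K * B)) by (apply H_lip; auto; apply inv_all; auto).
    eapply Rle_trans. apply (int3_bound _ (K * B + K * B) _ _ (2 * K * d1 q q')).
    { intros u u'. eapply Rle_trans. apply d1_subsub. pose proof (H_lip q n Hq (inv_all q Hq _) u u').
      pose proof (H_lip q' n Hq' (inv_all q' Hq' _) u u'). lra. }
    { intros x _. fold (d1 (F (P q n (clamp TT x))) (F (P q' n (clamp TT x)))).
      eapply Rle_trans. apply Flip; apply inball; auto; apply inv_all; auto.
      pose proof (n1_le_tri (sub3 (P q n (clamp TT x)) (P q' n (clamp TT x))) (sub3 q q')).
      pose proof (clamp_bound TT x (Rlt_le _ _ (TT_pos))).
      pose proof (IHn (clamp TT x) H0). pose proof TT_K. pose proof (d1_ge0 q q').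
      assert (2 * K * Rabs (clamp TT x) * d1 q q' <= d1 q q').
      { apply Rle_trans with ((2 * K * TT) * d1 q q'). apply Rmult_le_compat_r; auto.
        apply Rmult_le_compat_l; lra. nra. }
      fold (d1 (P q n (clamp TT x)) (P q' n (clamp TT x))) in H. fold (d1 q q') in H.
      replace (2 * K * d1 q q') with (K * (2 * d1 q q')) by ring.
      apply Rmult_le_compat_l; lra. }
    rewrite Rminus_0_r. pose proof (Rabs_pos t). lra.
Qed.

Lemma FL_dep q q' t : d1 q p < r / 2 -> d1 q' p < r / 2 -> Rabs t <= TT ->
  d1 (sub3 (FL q t) (FL q' t)) (sub3 q q') <= 2 * K * Rabs t * d1 q q'.
Proof.
  intros Hq Hq' Ht. apply le_geo with (c := 6 * r). intros n.
  pose proof (pic_dep q q' n t Hq Hq' Ht).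
  pose proof (d1_tri (sub3 (FL q t) (FL q' t)) (sub3 (P q n t) (P q' n t)) (sub3 q q')).
  pose proof (d1_subsub (FL q t) (FL q' t) (P q n t) (P q' n t)).
  pose proof (flow_close q n t Hq Ht). pose proof (flow_close q' n t Hq' Ht). lra.
Qed.

End ODE.


Lemma deriv_eps (phi : R -> R) t d :
  (forall e, 0 < e -> exists del, 0 < del /\ forall s, Rabs (s - t) < del ->
     Rabs (phi s - phi t - (s - t) * d) <= e * Rabs (s - t)) -> derivable_pt_lim phi t d.
Proof.
  intros H eps Heps. destruct (H (eps / 2)) as [del [Hd Hs]]; [lra|].
  exists (mkposreal del Hd). intros h Hh0 Hh. simpl in Hh.
  specialize (Hs (t + h)). replace (t + h - t) with h in Hs by ring.
  specialize (Hs Hh).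
  replace ((phi (t + h) - phi t) / h - d) with ((phi (t + h) - phi t - h * d) / h) by (field; auto).
  unfold Rdiv. rewrite Rabs_mult, Rabs_inv.
  assert (0 < Rabs h) by (apply Rabs_pos_lt; auto).
  apply Rle_lt_trans with (eps / 2 * Rabs h * / Rabs h).
  apply Rmult_le_compat_r; [apply Rlt_le, Rinv_0_lt_compat; auto | auto].
  field_simplify; lra.
Qed.

Lemma deriv_quad (phi : R -> R) t d C del : 0 < del ->
  (forall s, Rabs (s - t) < del -> Rabs (phi s - phi t - (s - t) * d) <= C * ((s - t) * (s - t))) ->
  derivable_pt_lim phi t d.
Proof.
  intros Hdel H. apply deriv_eps. intros e He.
  exists (Rmin del (e / (Rabs C + 1))). split.
  { apply Rmin_pos; auto. apply Rdiv_lt_0_compat; auto. pose proof (Rabs_pos C); lra. }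
  intros s Hs. eapply Rle_trans. apply H. eapply Rlt_le_trans; [apply Hs| apply Rmin_l].
  pose proof (Rmin_r del (e / (Rabs C + 1))). pose proof (Rabs_pos C). pose proof (RRle_abs C).
  pose proof (Rabs_pos (s - t)).
  assert (Rabs (s - t) * (Rabs C + 1) <= e).
  { apply Rle_trans with (e / (Rabs C + 1) * (Rabs C + 1)). apply Rmult_le_compat_r; lra.
    right; field; lra. }
  rewrite (sqr_abs_eq (s - t)). nra.
Qed.

Lemma comp_le_d1x a b : Rabs (px a - px b) <= d1 a b.
Proof. s3. absr. Qed.
Lemma comp_le_d1y a b : Rabs (py a - py b) <= d1 a b.
Proof. s3. absr. Qed.
Lemma comp_le_d1z a b : Rabs (pz a - pz b) <= d1 a b.
Proof. s3. absr. Qed.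

Lemma dot_sub_scal g h c F : dot3 g F = 0 -> dot3 g h = dot3 g (sub3 h (scal3 c F)).
Proof. intros H. transitivity (dot3 g h - c * dot3 g F). rewrite H; ring. s3. ring. Qed.

Lemma compq_x a b c x : Rabs (px a - px b - c * px x) <= d1 (sub3 a b) (scal3 c x).
Proof. s3. absr. Qed.
Lemma compq_y a b c x : Rabs (py a - py b - c * py x) <= d1 (sub3 a b) (scal3 c x).
Proof. s3. absr. Qed.
Lemma compq_z a b c x : Rabs (pz a - pz b - c * pz x) <= d1 (sub3 a b) (scal3 c x).
Proof. s3. absr. Qed.

Section ODE2.
Variables (p : R3) (r : R) (F : R3 -> R3) (K B : R).
Hypotheses (Hr : 0 < r) (HK : 0 < K) (HB : 0 < B) (HLB : LB p r F K B).
Notation T := (TT r K B).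
Notation FLo := (FL r F K B).

Lemma near_T t s : Rabs t < T -> Rabs (s - t) < T - Rabs t -> Rabs s <= T.
Proof. intros. absr. Qed.

Lemma FL_dx q t : d1 q p < r / 2 -> Rabs t < T ->
  derivable_pt_lim (fun s => px (FLo q s)) t (px (F (FLo q t))).
Proof.
  intros Hq Ht. apply deriv_quad with (C := K * B) (del := T - Rabs t). lra.
  intros s Hs. eapply Rle_trans. apply compq_x. apply (FL_quad p); auto. eapply near_T; eauto. lra.
Qed.
Lemma FL_dy q t : d1 q p < r / 2 -> Rabs t < T ->
  derivable_pt_lim (fun s => py (FLo q s)) t (py (F (FLo q t))).
Proof.
  intros Hq Ht. apply deriv_quad with (C := K * B) (del := T - Rabs t). lra.
  intros s Hs. eapply Rle_trans. apply compq_y. apply (FL_quad p); auto. eapply near_T; eauto. lra.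
Qed.
Lemma FL_dz q t : d1 q p < r / 2 -> Rabs t < T ->
  derivable_pt_lim (fun s => pz (FLo q s)) t (pz (F (FLo q t))).
Proof.
  intros Hq Ht. apply deriv_quad with (C := K * B) (del := T - Rabs t). lra.
  intros s Hs. eapply Rle_trans. apply compq_z. apply (FL_quad p); auto. eapply near_T; eauto. lra.
Qed.

Variables (f : R3 -> R) (g : R3 -> R3) (Gb : R).
Hypotheses (Hgrad : forall q, d1 q p < r -> has_gradient f q (g q))
  (Hgb : forall q, d1 q p < r -> n1 (g q) <= Gb)
  (Horth : forall q, d1 q p < r -> dot3 (g q) (F q) = 0).

Lemma add3_sub3 a b : add3 b (sub3 a b) = a.
Proof. apply eq3; s3; ring. Qed.

Lemma level_deriv q t : d1 q p < r / 2 -> Rabs t < T ->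
  derivable_pt_lim (fun s => f (FLo q s)) t 0.
Proof.
  intros Hq Ht. apply deriv_eps. intros e He.
  assert (Hball : d1 (FLo q t) p < r) by (apply (FL_ball p); auto; lra).
  destruct (Hgrad _ Hball (e / (2 * (B + 1)))) as [d0 [Hd0 Hg0]].
  { apply Rdiv_lt_0_compat; lra. }
  assert (HGb : 0 <= Gb). { pose proof (Hgb _ Hball). pose proof (n1_ge0 (g (FLo q t))). lra. }
  set (del := Rmin (T - Rabs t) (Rmin (d0 / (B + 1)) (e / (2 * (Gb * K * B + 1))))).
  assert (Hdel : 0 < del).
  { unfold del. apply Rmin_pos. lra. apply Rmin_pos; apply Rdiv_lt_0_compat; try lra.
    assert (0 <= Gb * K * B) by (apply Rmult_le_pos; [apply Rmult_le_pos|]; lra). lra. }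
  exists del. split; auto. intros s Hs.
  assert (Hs1 : Rabs (s - t) < T - Rabs t) by (eapply Rlt_le_trans; [apply Hs| apply Rmin_l]).
  assert (Hs2 : Rabs (s - t) < d0 / (B + 1)).
  { eapply Rlt_le_trans. apply Hs. unfold del. eapply Rle_trans; [apply Rmin_r| apply Rmin_l]. }
  assert (Hs3 : Rabs (s - t) < e / (2 * (Gb * K * B + 1))).
  { eapply Rlt_le_trans. apply Hs. unfold del. eapply Rle_trans; [apply Rmin_r| apply Rmin_r]. }
  assert (HsT : Rabs s <= T) by (eapply near_T; eauto).
  set (h := sub3 (FLo q s) (FLo q t)).
  assert (Hh1 : n1 h <= B * Rabs (s - t)) by (apply (FL_lip p); auto; lra).
  pose proof (Rabs_pos (s - t)) as Hst0.
  assert (Hh2 : norm3 h < d0).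
  { eapply Rle_lt_trans. apply norm3_le_n1.
    apply Rle_lt_trans with ((B + 1) * Rabs (s - t)). nra.
    apply Rmult_lt_compat_l with (r := B + 1) in Hs2; [|lra].
    replace ((B + 1) * (d0 / (B + 1))) with d0 in Hs2 by (field; lra). lra. }
  specialize (Hg0 h Hh2). unfold h in Hg0 at 1. rewrite add3_sub3 in Hg0.
  rewrite (dot_sub_scal _ _ (s - t) (F (FLo q t))) in Hg0 by (apply Horth; auto).
  pose proof (dot_bound (g (FLo q t)) (sub3 h (scal3 (s - t) (F (FLo q t))))) as Hdb.
  assert (Hq2 : n1 (sub3 h (scal3 (s - t) (F (FLo q t)))) <= K * B * ((s - t) * (s - t))).
  { apply (FL_quad p); auto; lra. }
  pose proof (Hgb _ Hball) as Hgq. pose proof (n1_ge0 (sub3 h (scal3 (s - t) (F (FLo q t))))).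
  assert (Hd1 : Rabs (dot3 (g (FLo q t)) (sub3 h (scal3 (s - t) (F (FLo q t))))) <= Gb * K * B * Rabs (s - t) * Rabs (s - t)).
  { eapply Rle_trans. apply Hdb. rewrite (sqr_abs_eq (s - t)) in Hq2.
    apply Rle_trans with (Gb * (K * B * (Rabs (s - t) * Rabs (s - t)))). 2: right; ring.
    apply Rmult_le_compat; auto; apply n1_ge0. }
  assert (Hd2 : Gb * K * B * Rabs (s - t) * Rabs (s - t) <= e / 2 * Rabs (s - t)).
  { assert (0 <= Gb * K * B) by (apply Rmult_le_pos; [apply Rmult_le_pos|]; lra).
    assert (Gb * K * B * Rabs (s - t) <= e / 2).
    { apply Rle_trans with ((Gb * K * B + 1) * Rabs (s - t)). nra.
      apply Rmult_lt_compat_l with (r := Gb * K * B + 1) in Hs3; [|lra].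
      replace ((Gb * K * B + 1) * (e / (2 * (Gb * K * B + 1)))) with (e / 2) in Hs3 by (field; lra). lra. }
    nra. }
  assert (Hd3 : e / (2 * (B + 1)) * norm3 h <= e / 2 * Rabs (s - t)).
  { pose proof (norm3_le_n1 h). assert (0 <= e / (2 * (B + 1))) by (apply Rlt_le, Rdiv_lt_0_compat; lra).
    apply Rle_trans with (e / (2 * (B + 1)) * ((B + 1) * Rabs (s - t))).
    apply Rmult_le_compat_l; auto. nra. right. field. lra. }
  replace ((s - t) * 0) with 0 by ring.
  set (D := dot3 (g (FLo q t)) (sub3 h (scal3 (s - t) (F (FLo q t))))) in *.
  replace (f (FLo q s) - f (FLo q t) - 0) with ((f (FLo q s) - f (FLo q t) - D) + D) by ring.
  eapply Rle_trans. apply Rabs_triang. lra.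
Qed.

Lemma level q t : d1 q p < r / 2 -> Rabs t < T -> f (FLo q t) = f q.
Proof.
  intros Hq Ht. rewrite <- (FL_0 p r F K B Hr HK HB HLB q Hq) at 2.
  destruct (Req_dec t 0) as [H0|H0]. { subst; reflexivity. }
  destruct (Rlt_dec 0 t) as [Hp|Hp].
  - destruct (MVT_cor2 (fun s => f (FLo q s)) (fun _ => 0) 0 t Hp) as [c [Hc _]].
    { intros c Hc. apply level_deriv; auto. absr. }
    lra.
  - destruct (MVT_cor2 (fun s => f (FLo q s)) (fun _ => 0) t 0) as [c [Hc _]]. lra.
    { intros c Hc. apply level_deriv; auto. absr. }
    lra.
Qed.

End ODE2.


Definition LBs (p : R3) (r : R) (s : R3 -> R) (K B : R) :=
  (forall q q', d1 q p < r -> d1 q' p < r -> Rabs (s q - s q') <= K * d1 q q') /\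
  (forall q, d1 q p < r -> Rabs (s q) <= B).

Lemma LB_B0 p r F K B : 0 < r -> LB p r F K B -> 0 <= B.
Proof. intros Hr [_ H]. pose proof (H p). rewrite d1_refl in H0. pose proof (n1_ge0 (F p)). specialize (H0 Hr). lra. Qed.
Lemma LBs_B0 p r F K B : 0 < r -> LBs p r F K B -> 0 <= B.
Proof. intros Hr [_ H]. pose proof (H p). rewrite d1_refl in H0. pose proof (Rabs_pos (F p)). specialize (H0 Hr). lra. Qed.

Lemma LB_mono p r F K B K' B' : LB p r F K B -> K <= K' -> B <= B' -> LB p r F K' B'.
Proof.
  intros [H1 H2] HK HB. split.
  - intros q q' Hq Hq'. pose proof (H1 q q' Hq Hq'). pose proof (d1_ge0 q q'). nra.
  - intros q Hq. pose proof (H2 q Hq). lra.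
Qed.

Lemma LB_const p r c : LB p r (fun _ => c) 0 (n1 c).
Proof. split. intros. rewrite d1_refl. pose proof (d1_ge0 q q'). lra. intros; lra. Qed.

Lemma LB_sub p r F G K1 B1 K2 B2 : LB p r F K1 B1 -> LB p r G K2 B2 ->
  LB p r (fun q => sub3 (F q) (G q)) (K1 + K2) (B1 + B2).
Proof.
  intros [F1 F2] [G1 G2]. split.
  - intros q q' Hq Hq'. eapply Rle_trans. apply d1_subsub. pose proof (F1 q q' Hq Hq'). pose proof (G1 q q' Hq Hq'). lra.
  - intros q Hq. eapply Rle_trans. apply n1_sub. pose proof (F2 q Hq). pose proof (G2 q Hq). lra.
Qed.

Lemma cross_diff a b a' b' : sub3 (cross a b) (cross a' b') = add3 (cross (sub3 a a') b) (cross a' (sub3 b b')).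
Proof. apply eq3; s3; ring. Qed.
Lemma dot_diff a b a' b' : dot3 a b - dot3 a' b' = dot3 (sub3 a a') b + dot3 a' (sub3 b b').
Proof. s3; ring. Qed.
Lemma scal_diff c a c' a' : sub3 (scal3 c a) (scal3 c' a') = add3 (scal3 (c - c') a) (scal3 c' (sub3 a a')).
Proof. apply eq3; s3; ring. Qed.

Lemma LB_cross p r F G K1 B1 K2 B2 : 0 < r -> LB p r F K1 B1 -> LB p r G K2 B2 ->
  LB p r (fun q => cross (F q) (G q)) (K1 * B2 + B1 * K2) (B1 * B2).
Proof.
  intros Hr HF HG. pose proof (LB_B0 _ _ _ _ _ Hr HF). pose proof (LB_B0 _ _ _ _ _ Hr HG).
  destruct HF as [F1 F2], HG as [G1 G2]. split.
  - intros q q' Hq Hq'. unfold d1. rewrite cross_diff. eapply Rle_trans. apply n1_add.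
    pose proof (cross_bound (sub3 (F q) (F q')) (G q)). pose proof (cross_bound (F q') (sub3 (G q) (G q'))).
    pose proof (F1 q q' Hq Hq'). pose proof (G1 q q' Hq Hq'). pose proof (F2 q' Hq'). pose proof (G2 q Hq).
    unfold d1 in *. pose proof (n1_ge0 (sub3 (F q) (F q'))). pose proof (n1_ge0 (sub3 (G q) (G q'))).
    pose proof (n1_ge0 (F q')). pose proof (n1_ge0 (G q)). pose proof (n1_ge0 (sub3 q q')).
    assert (n1 (sub3 (F q) (F q')) * n1 (G q) <= K1 * n1 (sub3 q q') * B2) by (apply Rmult_le_compat; auto).
    assert (n1 (F q') * n1 (sub3 (G q) (G q')) <= B1 * (K2 * n1 (sub3 q q'))) by (apply Rmult_le_compat; auto).
    nra.
  - intros q Hq. eapply Rle_trans. apply cross_bound. apply Rmult_le_compat; auto using n1_ge0.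
Qed.

Lemma LBs_dot p r F G K1 B1 K2 B2 : 0 < r -> LB p r F K1 B1 -> LB p r G K2 B2 ->
  LBs p r (fun q => dot3 (F q) (G q)) (K1 * B2 + B1 * K2) (B1 * B2).
Proof.
  intros Hr HF HG. pose proof (LB_B0 _ _ _ _ _ Hr HF). pose proof (LB_B0 _ _ _ _ _ Hr HG).
  destruct HF as [F1 F2], HG as [G1 G2]. split.
  - intros q q' Hq Hq'. rewrite dot_diff. eapply Rle_trans. apply Rabs_triang.
    pose proof (dot_bound (sub3 (F q) (F q')) (G q)). pose proof (dot_bound (F q') (sub3 (G q) (G q'))).
    pose proof (F1 q q' Hq Hq'). pose proof (G1 q q' Hq Hq'). pose proof (F2 q' Hq'). pose proof (G2 q Hq).
    unfold d1 in *. pose proof (n1_ge0 (sub3 (F q) (F q'))). pose proof (n1_ge0 (sub3 (G q) (G q'))).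
    pose proof (n1_ge0 (F q')). pose proof (n1_ge0 (G q)). pose proof (n1_ge0 (sub3 q q')).
    assert (n1 (sub3 (F q) (F q')) * n1 (G q) <= K1 * n1 (sub3 q q') * B2) by (apply Rmult_le_compat; auto).
    assert (n1 (F q') * n1 (sub3 (G q) (G q')) <= B1 * (K2 * n1 (sub3 q q'))) by (apply Rmult_le_compat; auto).
    nra.
  - intros q Hq. eapply Rle_trans. apply dot_bound. apply Rmult_le_compat; auto using n1_ge0.
Qed.

Lemma LB_scalf p r s G K1 B1 K2 B2 : 0 < r -> LBs p r s K1 B1 -> LB p r G K2 B2 ->
  LB p r (fun q => scal3 (s q) (G q)) (K1 * B2 + B1 * K2) (B1 * B2).
Proof.
  intros Hr HF HG. pose proof (LBs_B0 _ _ _ _ _ Hr HF). pose proof (LB_B0 _ _ _ _ _ Hr HG).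
  destruct HF as [F1 F2], HG as [G1 G2]. split.
  - intros q q' Hq Hq'. unfold d1. rewrite scal_diff. eapply Rle_trans. apply n1_add. rewrite !n1_scal.
    pose proof (F1 q q' Hq Hq'). pose proof (G1 q q' Hq Hq'). pose proof (F2 q' Hq'). pose proof (G2 q Hq).
    unfold d1 in *. pose proof (Rabs_pos (s q - s q')). pose proof (n1_ge0 (sub3 (G q) (G q'))).
    pose proof (Rabs_pos (s q')). pose proof (n1_ge0 (G q)). pose proof (n1_ge0 (sub3 q q')).
    assert (Rabs (s q - s q') * n1 (G q) <= K1 * n1 (sub3 q q') * B2) by (apply Rmult_le_compat; auto).
    assert (Rabs (s q') * n1 (sub3 (G q) (G q')) <= B1 * (K2 * n1 (sub3 q q'))) by (apply Rmult_le_compat; auto).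
    nra.
  - intros q Hq. rewrite n1_scal. apply Rmult_le_compat; auto using n1_ge0, Rabs_pos.
Qed.

Lemma LB_scal p r c F K B : LB p r F K B -> LB p r (fun q => scal3 c (F q)) (Rabs c * K) (Rabs c * B).
Proof.
  intros [F1 F2]. pose proof (Rabs_pos c). split.
  - intros q q' Hq Hq'. rewrite d1_scal. rewrite Rmult_assoc. apply Rmult_le_compat_l; auto.
  - intros q Hq. rewrite n1_scal. apply Rmult_le_compat_l; auto.
Qed.

Definition nf (q : R3) : R3 := mk3 (py q / 2) (- px q / 2) 1.

Lemma LB_nf p r : LB p r nf 1 (n1 p + r + 1).
Proof.
  split.
  - intros q q' _ _. unfold nf. s3. absr.
  - intros q Hq. pose proof (n1_le_tri q p). unfold nf. assert (n1 (mk3 (py q / 2) (- px q / 2) 1) <= n1 q + 1).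
    { unfold n1 in *. simpl. absr. }
    lra.
Qed.

Lemma dist3_refl q : dist3 q q = 0.
Proof. unfold dist3. replace ((px q - px q) ^ 2 + (py q - py q) ^ 2 + (pz q - pz q) ^ 2) with 0 by ring. apply sqrt_0. Qed.
Lemma dist3_ge0 a b : 0 <= dist3 a b.
Proof. apply sqrt_pos. Qed.

Lemma LB_g p r g Kg : 0 < r ->
  (forall q q', dist3 q p < r -> dist3 q' p < r -> dist3 (g q) (g q') <= Kg * dist3 q q') ->
  LB p r g (2 * Rabs Kg) (n1 (g p) + 2 * Rabs Kg * r).
Proof.
  intros Hr H.
  assert (L : forall q q', d1 q p < r -> d1 q' p < r -> d1 (g q) (g q') <= 2 * Rabs Kg * d1 q q').
  { intros q q' Hq Hq'. pose proof (dist3_le_d1 q p). pose proof (dist3_le_d1 q' p).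
    pose proof (H q q' ltac:(lra) ltac:(lra)). pose proof (d1_le_dist3 (g q) (g q')).
    pose proof (dist3_le_d1 q q'). pose proof (dist3_ge0 q q'). pose proof (RRle_abs Kg). pose proof (Rabs_pos Kg).
    assert (Kg * dist3 q q' <= Rabs Kg * d1 q q'). { apply Rle_trans with (Rabs Kg * dist3 q q'). nra. nra. }
    lra. }
  split; auto.
  intros q Hq. pose proof (n1_le_tri (g q) (g p)). pose proof (L q p Hq ltac:(rewrite d1_refl; lra)).
  pose proof (Rabs_pos Kg). assert (2 * Rabs Kg * d1 q p <= 2 * Rabs Kg * r) by (apply Rmult_le_compat_l; lra). lra.
Qed.


Lemma dot_ge0 x : 0 <= dot3 x x.
Proof. unfold dot3. nra. Qed.
Lemma norm3_ge0 x : 0 <= norm3 x.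
Proof. apply sqrt_pos. Qed.
Lemma norm3_sq x : norm3 x * norm3 x = dot3 x x.
Proof. unfold norm3. apply sqrt_sqrt. apply dot_ge0. Qed.

Lemma lagrange x y : dot3 x x * dot3 y y - dot3 x y * dot3 x y = dot3 (cross x y) (cross x y).
Proof. s3. ring. Qed.

Lemma CS x y : dot3 x y <= norm3 x * norm3 y.
Proof.
  destruct (Rle_dec (dot3 x y) 0). { pose proof (norm3_ge0 x); pose proof (norm3_ge0 y); nra. }
  apply Rsqr_incr_0_var. 2: { pose proof (norm3_ge0 x); pose proof (norm3_ge0 y); nra. }
  unfold Rsqr. replace (norm3 x * norm3 y * (norm3 x * norm3 y)) with ((norm3 x * norm3 x) * (norm3 y * norm3 y)) by ring.
  rewrite !norm3_sq. pose proof (lagrange x y). pose proof (dot_ge0 (cross x y)). lra.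
Qed.

Lemma norm3_tri x y : norm3 (add3 x y) <= norm3 x + norm3 y.
Proof.
  apply Rsqr_incr_0_var. 2: { pose proof (norm3_ge0 x); pose proof (norm3_ge0 y); lra. }
  unfold Rsqr. rewrite norm3_sq.
  replace ((norm3 x + norm3 y) * (norm3 x + norm3 y)) with (norm3 x * norm3 x + norm3 y * norm3 y + 2 * (norm3 x * norm3 y)) by ring.
  rewrite !norm3_sq. pose proof (CS x y).
  replace (dot3 (add3 x y) (add3 x y)) with (dot3 x x + dot3 y y + 2 * dot3 x y) by (s3; ring). lra.
Qed.

Lemma norm3_neg x : norm3 (scal3 (-1) x) = norm3 x.
Proof. unfold norm3. f_equal. s3. ring. Qed.

Lemma norm3_close m E : norm3 m - norm3 E <= norm3 (add3 m E) <= norm3 m + norm3 E.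
Proof.
  split. 2: apply norm3_tri.
  pose proof (norm3_tri (add3 m E) (scal3 (-1) E)). rewrite norm3_neg in H.
  replace (add3 (add3 m E) (scal3 (-1) E)) with m in H by (apply eq3; s3; ring). lra.
Qed.

Lemma sum_abs_le_dist2 a b : Rabs (fst a - fst b) + Rabs (snd a - snd b) <= 2 * dist2 a b.
Proof.
  unfold dist2. set (x := fst a - fst b). set (y := snd a - snd b).
  apply Rsqr_incr_0_var. 2: { pose proof (sqrt_pos (x ^ 2 + y ^ 2)); lra. }
  unfold Rsqr. replace (2 * sqrt (x ^ 2 + y ^ 2) * (2 * sqrt (x ^ 2 + y ^ 2))) with (4 * (sqrt (x ^ 2 + y ^ 2) * sqrt (x ^ 2 + y ^ 2))) by ring.
  rewrite sqrt_sqrt by nra.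
  pose proof (sqr_abs_eq x). pose proof (sqr_abs_eq y). pose proof (Rabs_pos x). pose proof (Rabs_pos y).
  pose proof (Rle_0_sqr (Rabs x - Rabs y)). unfold Rsqr in *. simpl. nra.
Qed.

Lemma main_norm W0 V0 a b : dot3 W0 W0 = 1 -> dot3 V0 V0 = 1 -> dot3 W0 V0 = 0 ->
  norm3 (add3 (scal3 (fst a - fst b) W0) (scal3 (snd a - snd b) V0)) = dist2 a b.
Proof.
  intros H1 H2 H3. unfold norm3, dist2. f_equal.
  set (x := fst a - fst b). set (y := snd a - snd b).
  transitivity (x * x * dot3 W0 W0 + y * y * dot3 V0 V0 + 2 * x * y * dot3 W0 V0). s3. ring.
  rewrite H1, H2, H3. ring.
Qed.


Lemma quad_le K B d e : 0 <= K -> 0 <= B -> Rabs d <= 2 * e -> K * B * (d * d) <= 2 * K * B * e * Rabs d.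
Proof.
  intros. rewrite (sqr_abs_eq d). pose proof (Rabs_pos d).
  assert (0 <= K * B) by (apply Rmult_le_pos; auto).
  replace (2 * K * B * e * Rabs d) with ((K * B) * (Rabs d * (2 * e))) by ring.
  apply Rmult_le_compat_l; auto. apply Rmult_le_compat_l; auto.
Qed.

Lemma bilip_abs (sig : R -> R3) (phi : R3 -> R -> R3) (Vf Wf : R3 -> R3) K B eps W0 V0 :
  0 <= K -> 0 <= B -> 0 <= eps -> 5 * K * B * eps <= / 4 ->
  dot3 W0 W0 = 1 -> dot3 V0 V0 = 1 -> dot3 W0 V0 = 0 ->
  (forall u v v', Rabs u <= eps -> Rabs v <= eps -> Rabs v' <= eps ->
     d1 (sub3 (phi (sig v) u) (phi (sig v') u)) (sub3 (sig v) (sig v')) <= 2 * K * Rabs u * d1 (sig v) (sig v')) ->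
  (forall v v', Rabs v <= eps -> Rabs v' <= eps -> d1 (sig v) (sig v') <= B * Rabs (v - v')) ->
  (forall v v', Rabs v <= eps -> Rabs v' <= eps ->
     d1 (sub3 (sig v) (sig v')) (scal3 (v - v') (Vf (sig v'))) <= K * B * ((v - v') * (v - v'))) ->
  (forall v', Rabs v' <= eps -> d1 (Vf (sig v')) V0 <= K * B * eps) ->
  (forall u u' v', Rabs u <= eps -> Rabs u' <= eps -> Rabs v' <= eps ->
     d1 (sub3 (phi (sig v') u) (phi (sig v') u')) (scal3 (u - u') (Wf (phi (sig v') u'))) <= K * B * ((u - u') * (u - u'))) ->
  (forall u' v', Rabs u' <= eps -> Rabs v' <= eps -> d1 (Wf (phi (sig v') u')) W0 <= 2 * K * B * eps) ->
  bi_lipschitz_on_square 2 eps (fun a => phi (sig (snd a)) (fst a)).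
Proof.
  intros HK HB He Hsmall HW HV HWV H1 H2 H3 H4 H5 H6.
  intros [u v] [u' v'] Ha Hb. unfold in_square in *; simpl in *.
  assert (Hu : Rabs u <= eps) by absr. assert (Hv : Rabs v <= eps) by absr.
  assert (Hu' : Rabs u' <= eps) by absr. assert (Hv' : Rabs v' <= eps) by absr.
  assert (Hdu : Rabs (u - u') <= 2 * eps) by absr. assert (Hdv : Rabs (v - v') <= 2 * eps) by absr.
  set (main := add3 (scal3 (fst (u, v) - fst (u', v')) W0) (scal3 (snd (u, v) - snd (u', v')) V0)).
  set (e1 := sub3 (sub3 (phi (sig v) u) (phi (sig v') u)) (sub3 (sig v) (sig v'))).
  set (e2 := sub3 (sub3 (sig v) (sig v')) (scal3 (v - v') (Vf (sig v')))).
  set (e3 := scal3 (v - v') (sub3 (Vf (sig v')) V0)).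
  set (e4 := sub3 (sub3 (phi (sig v') u) (phi (sig v') u')) (scal3 (u - u') (Wf (phi (sig v') u')))).
  set (e5 := scal3 (u - u') (sub3 (Wf (phi (sig v') u')) W0)).
  assert (HD : sub3 (phi (sig v) u) (phi (sig v') u') = add3 main (add3 e1 (add3 e2 (add3 e3 (add3 e4 e5))))).
  { unfold main, e1, e2, e3, e4, e5. apply eq3; s3; ring. }
  set (E := add3 e1 (add3 e2 (add3 e3 (add3 e4 e5)))) in HD.
  assert (HE : n1 E <= n1 e1 + n1 e2 + n1 e3 + n1 e4 + n1 e5).
  { unfold E. pose proof (n1_add e1 (add3 e2 (add3 e3 (add3 e4 e5)))). pose proof (n1_add e2 (add3 e3 (add3 e4 e5))).
    pose proof (n1_add e3 (add3 e4 e5)). pose proof (n1_add e4 e5). lra. }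
  pose proof (Rabs_pos (u - u')) as P1. pose proof (Rabs_pos (v - v')) as P2.
  assert (KB0 : 0 <= K * B) by (apply Rmult_le_pos; auto).
  assert (B1 : n1 e1 <= 2 * K * B * eps * Rabs (v - v')).
  { unfold e1. fold (d1 (sub3 (phi (sig v) u) (phi (sig v') u)) (sub3 (sig v) (sig v'))).
    eapply Rle_trans. apply H1; auto. pose proof (H2 v v' Hv Hv'). pose proof (Rabs_pos u).
    pose proof (d1_ge0 (sig v) (sig v')).
    apply Rle_trans with (2 * K * eps * d1 (sig v) (sig v')).
    apply Rmult_le_compat_r; auto. apply Rmult_le_compat_l; lra.
    replace (2 * K * B * eps * Rabs (v - v')) with (2 * K * eps * (B * Rabs (v - v'))) by ring.
    apply Rmult_le_compat_l; auto. apply Rmult_le_pos; lra. }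
  assert (B2 : n1 e2 <= 2 * K * B * eps * Rabs (v - v')).
  { unfold e2. fold (d1 (sub3 (sig v) (sig v')) (scal3 (v - v') (Vf (sig v')))).
    eapply Rle_trans. apply H3; auto. apply quad_le; auto. }
  assert (B3 : n1 e3 <= K * B * eps * Rabs (v - v')).
  { unfold e3. rewrite n1_scal. fold (d1 (Vf (sig v')) V0). pose proof (H4 v' Hv').
    rewrite Rmult_comm. apply Rmult_le_compat_r; auto. }
  assert (B4 : n1 e4 <= 2 * K * B * eps * Rabs (u - u')).
  { unfold e4. fold (d1 (sub3 (phi (sig v') u) (phi (sig v') u')) (scal3 (u - u') (Wf (phi (sig v') u')))).
    eapply Rle_trans. apply H5; auto. apply quad_le; auto. }
  assert (B5 : n1 e5 <= 2 * K * B * eps * Rabs (u - u')).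
  { unfold e5. rewrite n1_scal. fold (d1 (Wf (phi (sig v') u')) W0). pose proof (H6 u' v' Hu' Hv').
    rewrite Rmult_comm. apply Rmult_le_compat_r; auto. }
  pose proof (sum_abs_le_dist2 (u, v) (u', v')) as Hs2. simpl in Hs2.
  assert (HE2 : n1 E <= / 2 * dist2 (u, v) (u', v')).
  { apply Rle_trans with (5 * K * B * eps * (Rabs (u - u') + Rabs (v - v'))). { set (X := K * B * eps). assert (EQ1 : 2 * K * B * eps = 2 * X) by (unfold X; ring). assert (EQ2 : 5 * K * B * eps = 5 * X) by (unfold X; ring). assert (EQ3 : K * B * eps = X) by reflexivity. rewrite EQ1 in *. rewrite EQ3 in B3. rewrite EQ2. assert (0 <= X) by (unfold X; apply Rmult_le_pos; auto). assert (0 <= X * Rabs (u - u')) by (apply Rmult_le_pos; auto). nra. }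
    apply Rle_trans with (/ 4 * (Rabs (u - u') + Rabs (v - v'))). apply Rmult_le_compat_r; lra. lra. }
  pose proof (norm3_le_n1 E). pose proof (norm3_close main E).
  rewrite <- HD in H0. unfold main in H0. rewrite main_norm in H0 by auto.
  rewrite <- dist3_norm in H0. simpl.
  pose proof (sqrt_pos ((fst (u, v) - fst (u', v')) ^ 2 + (snd (u, v) - snd (u', v')) ^ 2)).
  fold (dist2 (u, v) (u', v')) in *. lra.
Qed.


Lemma Hplane_iff p v : Hplane p v <-> dot3 (nf p) v = 0.
Proof.
  split.
  - intros [a [b Hv]]. subst v. unfold nf, Xf, Yf. s3. field.
  - intros H. exists (px v), (py v). apply eq3; unfold nf, Xf, Yf in *; s3; lra.
Qed.

Lemma der_bound (phi : R -> R) l : derivable_pt_lim phi 0 l ->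
  forall e, 0 < e -> exists d, 0 < d /\ forall h, 0 < h < d -> Rabs (phi h - phi 0 - h * l) <= e * h.
Proof.
  intros H e He. destruct (H e He) as [d Hd]. exists d. split. apply cond_pos.
  intros h [Hh1 Hh2]. specialize (Hd h ltac:(lra) ltac:(rewrite Rabs_right; lra)).
  rewrite Rplus_0_l in Hd.
  replace (phi h - phi 0 - h * l) with (h * ((phi h - phi 0) / h - l)) by (field; lra).
  rewrite Rabs_mult, Rabs_right by lra. rewrite Rmult_comm. apply Rmult_le_compat_r; lra.
Qed.

Lemma small_const x C : 0 <= C -> (forall e, 0 < e <= 1 -> Rabs x <= e * C) -> x = 0.
Proof.
  intros HC H. destruct (Req_dec x 0) as [|Hx]; auto. exfalso.
  assert (Hx' : 0 < Rabs x) by (apply Rabs_pos_lt; auto).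
  set (e := Rmin 1 (Rabs x / (2 * (C + 1)))).
  assert (0 < e) by (apply Rmin_pos; [lra| apply Rdiv_lt_0_compat; lra]).
  assert (e <= Rabs x / (2 * (C + 1))) by apply Rmin_r.
  specialize (H e ltac:(split; [lra| apply Rmin_l])).
  assert (e * (C + 1) <= Rabs x / 2).
  { apply Rle_trans with (Rabs x / (2 * (C + 1)) * (C + 1)). apply Rmult_le_compat_r; lra. right; field; lra. }
  nra.
Qed.

Section CHAR.
Variables (M : R3 -> Prop) (p0 : R3) (r0 : R) (f : R3 -> R) (g : R3 -> R3) (Kg Bg : R).
Hypotheses (Hr0 : 0 < r0) (Hgrad : forall q, d1 q p0 < r0 -> has_gradient f q (g q))
  (HgLB : LB p0 r0 g Kg Bg) (HMf : forall q, d1 q p0 < r0 -> (M q <-> f q = 0)) (HM0 : M p0)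
  (Hg0 : g p0 <> zero3).

Lemma f_p0 : f p0 = 0.
Proof. apply HMf; auto. rewrite d1_refl; auto. Qed.

Lemma tangent_orth v : tangent_space M p0 v -> dot3 (g p0) v = 0.
Proof.
  intros [gam [del [Hdel [G0 [HM [Dx [Dy Dz]]]]]]].
  set (g0 := g p0). set (C := n1 v + 4 + 3 * n1 g0).
  apply small_const with C. { unfold C. pose proof (n1_ge0 v); pose proof (n1_ge0 g0); lra. }
  intros e [He He1].
  destruct (Hgrad p0 ltac:(rewrite d1_refl; auto) e He) as [d1' [Hd1 Hg]].
  destruct (der_bound _ _ Dx e He) as [dx [Hdx Bx]].
  destruct (der_bound _ _ Dy e He) as [dy [Hdy By]].
  destruct (der_bound _ _ Dz e He) as [dz [Hdz Bz]].
  set (A := n1 v + 3 * e + 1).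
  assert (HA : 1 <= A) by (unfold A; pose proof (n1_ge0 v); lra).
  set (h := Rmin (Rmin del (Rmin dx (Rmin dy dz))) (Rmin (d1' / A) (r0 / A)) / 2).
  assert (Hm : 0 < Rmin (Rmin del (Rmin dx (Rmin dy dz))) (Rmin (d1' / A) (r0 / A))).
  { repeat apply Rmin_pos; auto; apply Rdiv_lt_0_compat; lra. }
  assert (Hh0 : 0 < h) by (unfold h; lra).
  assert (Hle : forall x, Rmin (Rmin del (Rmin dx (Rmin dy dz))) (Rmin (d1' / A) (r0 / A)) <= x -> h < x) by (intros; unfold h; lra).
  assert (hdel : h < del). { apply Hle. eapply Rle_trans; apply Rmin_l. }
  assert (hdx : h < dx). { apply Hle. eapply Rle_trans. apply Rmin_l. eapply Rle_trans. apply Rmin_r. apply Rmin_l. }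
  assert (hdy : h < dy). { apply Hle. eapply Rle_trans. apply Rmin_l. eapply Rle_trans. apply Rmin_r. eapply Rle_trans. apply Rmin_r. apply Rmin_l. }
  assert (hdz : h < dz). { apply Hle. eapply Rle_trans. apply Rmin_l. eapply Rle_trans. apply Rmin_r. eapply Rle_trans. apply Rmin_r. apply Rmin_r. }
  assert (hd1 : h * A < d1'). { assert (h < d1' / A). apply Hle. eapply Rle_trans. apply Rmin_r. apply Rmin_l.
    apply Rmult_lt_compat_r with (r := A) in H; [|lra]. replace (d1' / A * A) with d1' in H by (field; lra). lra. }
  assert (hr0 : h * A < r0). { assert (h < r0 / A). apply Hle. eapply Rle_trans. apply Rmin_r. apply Rmin_r.
    apply Rmult_lt_compat_r with (r := A) in H; [|lra]. replace (r0 / A * A) with r0 in H by (field; lra). lra. }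
  specialize (Bx h ltac:(lra)). specialize (By h ltac:(lra)). specialize (Bz h ltac:(lra)).
  rewrite G0 in Bx, By, Bz.
  set (w := sub3 (gam h) p0).
  assert (Hw : n1 (sub3 w (scal3 h v)) <= 3 * e * h).
  { unfold w. s3. simpl in *. absr. }
  assert (Hwn : n1 w <= h * A).
  { pose proof (n1_le_tri w (scal3 h v)). rewrite n1_scal, Rabs_right in H by lra. unfold d1 in H.
    unfold A. nra. }
  assert (Hin : d1 (gam h) p0 < r0) by (unfold d1; fold w; lra).
  assert (Hf : f (gam h) = 0) by (apply HMf; auto; apply HM; rewrite Rabs_right; lra).
  specialize (Hg w ltac:(pose proof (norm3_le_n1 w); lra)).
  replace (add3 p0 w) with (gam h) in Hg by (unfold w; apply eq3; s3; ring).
  rewrite Hf, f_p0 in Hg. fold g0 in Hg.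
  assert (E1 : Rabs (dot3 g0 w) <= e * (h * A)).
  { replace (dot3 g0 w) with (- (0 - 0 - dot3 g0 w)) by ring. rewrite Rabs_Ropp.
    eapply Rle_trans. apply Hg. pose proof (norm3_le_n1 w). apply Rmult_le_compat_l; lra. }
  assert (E2 : Rabs (dot3 g0 w - h * dot3 g0 v) <= n1 g0 * (3 * e * h)).
  { replace (dot3 g0 w - h * dot3 g0 v) with (dot3 g0 (sub3 w (scal3 h v))) by (s3; ring).
    eapply Rle_trans. apply dot_bound. apply Rmult_le_compat_l; auto. apply n1_ge0. }
  assert (E3 : h * Rabs (dot3 g0 v) <= h * (e * C)).
  { rewrite <- (Rabs_right h) at 1 by lra. rewrite <- Rabs_mult.
    replace (h * dot3 g0 v) with (dot3 g0 w - (dot3 g0 w - h * dot3 g0 v)) by ring.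
    unfold Rminus at 1. eapply Rle_trans. apply Rabs_triang. rewrite Rabs_Ropp.
    unfold A in E1. pose proof (n1_ge0 g0). pose proof (n1_ge0 v).
    assert (e * (h * (n1 v + 3 * e + 1)) <= e * h * (n1 v + 4)).
    { replace (e * (h * (n1 v + 3 * e + 1))) with (e * h * (n1 v + 3 * e + 1)) by ring.
      apply Rmult_le_compat_l. apply Rmult_le_pos; lra. lra. }
    unfold C. nra. }
  apply Rmult_le_reg_l with h; auto.
Qed.

Lemma g0_dot_pos : 0 < dot3 (g p0) (g p0).
Proof.
  destruct (Rle_dec (dot3 (g p0) (g p0)) 0) as [H|H]; [|lra]. exfalso. apply Hg0.
  unfold dot3 in H.
  assert (Z : forall x, x * x = 0 -> x = 0) by (intros x Hx; destruct (Rmult_integral _ _ Hx); auto).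
  pose proof (Rle_0_sqr (px (g p0))); pose proof (Rle_0_sqr (py (g p0))); pose proof (Rle_0_sqr (pz (g p0))).
  unfold Rsqr in *.
  apply eq3; unfold zero3; simpl; apply Z; simpl in *; lra.
Qed.

Lemma tangent_of_orth v : dot3 (g p0) v = 0 -> tangent_space M p0 v.
Proof.
  intros Hv.
  set (Pf := fun q => sub3 (scal3 (dot3 (g q) (g q)) v) (scal3 (dot3 (g q) v) (g q))).
  pose proof (LB_sub _ _ _ _ _ _ _ _ (LB_scalf _ _ _ _ _ _ _ _ Hr0 (LBs_dot _ _ _ _ _ _ _ _ Hr0 HgLB HgLB) (LB_const p0 r0 v))
     (LB_scalf _ _ _ _ _ _ _ _ Hr0 (LBs_dot _ _ _ _ _ _ _ _ Hr0 HgLB (LB_const p0 r0 v)) HgLB)) as L.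
  fold Pf in L.
  match type of L with LB _ _ _ ?K0 ?B0 =>
    assert (HLB : LB p0 r0 Pf (Rabs K0 + 1) (Rabs B0 + 1)) by
      (apply (LB_mono _ _ _ _ _ _ _ L); [pose proof (RRle_abs K0) | pose proof (RRle_abs B0)]; lra);
    assert (HK : 0 < Rabs K0 + 1) by (pose proof (Rabs_pos K0); lra);
    assert (HB : 0 < Rabs B0 + 1) by (pose proof (Rabs_pos B0); lra);
    set (K := Rabs K0 + 1) in *; set (B := Rabs B0 + 1) in * end.
  assert (Horth : forall q, d1 q p0 < r0 -> dot3 (g q) (Pf q) = 0) by (intros; unfold Pf; s3; ring).
  assert (Hgb : forall q, d1 q p0 < r0 -> n1 (g q) <= Bg) by apply HgLB.
  pose proof g0_dot_pos as Hc. set (c := dot3 (g p0) (g p0)) in *.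
  pose proof (TT_pos r0 K B Hr0 HK HB) as HT. set (T := TT r0 K B) in *.
  assert (Hp0 : d1 p0 p0 < r0 / 2) by (rewrite d1_refl; lra).
  set (phi := FL r0 Pf K B p0).
  assert (Hphi0 : phi 0 = p0) by (apply (FL_0 p0 r0 Pf K B); auto).
  assert (HP0 : Pf p0 = scal3 c v) by (unfold Pf, c; rewrite Hv; apply eq3; s3; ring).
  assert (Hq : forall s, Rabs s < c * T -> d1 (sub3 (phi (s / c)) (phi (0 / c))) (scal3 (s - 0) v) <= K * B / (c * c) * ((s - 0) * (s - 0))).
  { intros s Hs. unfold Rdiv at 2. rewrite Rmult_0_l, Hphi0.
    assert (Hsc : Rabs (s / c) <= T).
    { unfold Rdiv. rewrite Rabs_mult, Rabs_inv, (Rabs_right c) by lra.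
      apply Rmult_le_reg_r with c; auto. field_simplify; lra. }
    pose proof (FL_quad p0 r0 Pf K B Hr0 HK HB HLB p0 (s / c) 0 Hp0 Hsc ltac:(rewrite Rabs_R0; apply Rlt_le; exact HT)).
    fold phi in H. rewrite Hphi0, HP0 in H.
    replace (scal3 (s / c - 0) (scal3 c v)) with (scal3 (s - 0) v) in H by (apply eq3; s3; field; lra).
    replace (K * B / (c * c) * ((s - 0) * (s - 0))) with (K * B * ((s / c - 0) * (s / c - 0))) by (field; lra). exact H. }
  exists (fun t => phi (t / c)), (c * T). split; [apply Rmult_lt_0_compat; auto|]. split.
  { simpl. unfold Rdiv. rewrite Rmult_0_l. auto. }
  split.
  { intros t Ht. assert (Htc : Rabs (t / c) < T).
    { unfold Rdiv. rewrite Rabs_mult, Rabs_inv, (Rabs_right c) by lra.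
      apply Rmult_lt_reg_r with c; auto. field_simplify; lra. }
    assert (HB2 : d1 (phi (t / c)) p0 < r0) by (apply (FL_ball p0 r0 Pf K B); auto; apply Rlt_le; exact Htc).
    apply HMf; auto. unfold phi. rewrite (level p0 r0 Pf K B Hr0 HK HB HLB f g Bg Hgrad Hgb Horth p0 (t / c) Hp0 Htc).
    apply f_p0. }
  assert (Hc' : 0 < c * T) by (apply Rmult_lt_0_compat; auto).
  split; [|split].
  - apply deriv_quad with (C := K * B / (c * c)) (del := c * T); auto.
    intros s Hs. eapply Rle_trans; [apply compq_x|]. apply Hq. rewrite Rminus_0_r in Hs. auto.
  - apply deriv_quad with (C := K * B / (c * c)) (del := c * T); auto.
    intros s Hs. eapply Rle_trans; [apply compq_y|]. apply Hq. rewrite Rminus_0_r in Hs. auto.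
  - apply deriv_quad with (C := K * B / (c * c)) (del := c * T); auto.
    intros s Hs. eapply Rle_trans; [apply compq_z|]. apply Hq. rewrite Rminus_0_r in Hs. auto.
Qed.

Lemma cross_cross a b v : cross (cross a b) v = sub3 (scal3 (dot3 a v) b) (scal3 (dot3 b v) a).
Proof. apply eq3; s3; ring. Qed.

Lemma nz_comp a x : a <> zero3 -> x * px a = 0 -> x * py a = 0 -> x * pz a = 0 -> x = 0.
Proof.
  intros Ha H1 H2 H3. destruct (Req_dec x 0); auto. exfalso. apply Ha.
  apply eq3; unfold zero3; simpl; [apply (Rmult_eq_reg_l x)|apply (Rmult_eq_reg_l x)|apply (Rmult_eq_reg_l x)]; simpl in *; lra.
Qed.

Lemma char_of_par : cross (g p0) (nf p0) = zero3 -> characteristic M p0.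
Proof.
  intros Hc. split; auto. intros v. rewrite Hplane_iff.
  pose proof (cross_cross (g p0) (nf p0) v) as Id. rewrite Hc in Id.
  assert (Ex : dot3 (g p0) v * px (nf p0) - dot3 (nf p0) v * px (g p0) = 0).
  { pose proof (f_equal (fun a => px a) Id) as E. unfold zero3, cross, sub3, scal3 in E. simpl in E. simpl. lra. }
  assert (Ey : dot3 (g p0) v * py (nf p0) - dot3 (nf p0) v * py (g p0) = 0).
  { pose proof (f_equal (fun a => py a) Id) as E. unfold zero3, cross, sub3, scal3 in E. simpl in E. simpl. lra. }
  assert (Ez : dot3 (g p0) v * pz (nf p0) - dot3 (nf p0) v * pz (g p0) = 0).
  { pose proof (f_equal (fun a => pz a) Id) as E. unfold zero3, cross, sub3, scal3 in E. simpl in E. simpl. lra. }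
  split.
  - intros Ht. pose proof (tangent_orth v Ht) as Ho. rewrite Ho in Ex, Ey, Ez.
    apply (nz_comp (g p0)); auto; lra.
  - intros Hn. apply tangent_of_orth. rewrite Hn in Ez. unfold nf in Ez. simpl in Ez. lra.
Qed.
End CHAR.


Lemma ordered_le a l b : ordered_intervals a l b -> a <= b.
Proof.
  revert a. induction l as [|[s t] l IH]; simpl; intros a H; auto.
  destruct H as [H1 [H2 H3]]. pose proof (IH t H3). lra.
Qed.

Lemma abs_cont_lip (gam : R -> R3) a b Lc : 0 < Lc ->
  (forall s t, a <= s <= b -> a <= t <= b -> dist3 (gam t) (gam s) <= Lc * Rabs (t - s)) ->
  abs_continuous_on a b gam.
Proof.
  intros HL H e He. exists (e / Lc). split. apply Rdiv_lt_0_compat; auto.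
  assert (Aux : forall l a', a <= a' -> ordered_intervals a' l b -> total_variation gam l <= Lc * total_length l).
  { induction l as [|[s t] l IH]; simpl; intros a' Ha Ho. lra.
    destruct Ho as [H1 [H2 H3]]. pose proof (ordered_le _ _ _ H3).
    pose proof (H s t ltac:(lra) ltac:(lra)). rewrite Rabs_right in H4 by lra.
    pose proof (IH t ltac:(lra) H3). lra. }
  intros l Ho Hl. pose proof (Aux l a (Rle_refl a) Ho).
  apply Rmult_lt_compat_l with (r := Lc) in Hl; auto.
  replace (Lc * (e / Lc)) with e in Hl by (field; lra). lra.
Qed.

Lemma sum_zero n : sum_f_R0 (fun _ => 0 - 0) n = 0.
Proof. induction n; simpl; [ring| rewrite IHn; ring]. Qed.

Lemma null_empty (N : R -> Prop) : (forall t, ~ N t) -> null_set N.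
Proof.
  intros H e He. exists (fun _ => 0), (fun _ => 0). split; [intros; lra|]. split.
  - intros t Ht. exfalso. exact (H t Ht).
  - intros n. rewrite sum_zero. lra.
Qed.

Lemma dot_pos_nz x : x <> zero3 -> 0 < dot3 x x.
Proof.
  intros Hx. destruct (Rle_dec (dot3 x x) 0) as [H|H]; [|lra]. exfalso. apply Hx.
  unfold dot3 in H.
  assert (Z : forall y, y * y = 0 -> y = 0) by (intros y Hy; destruct (Rmult_integral _ _ Hy); auto).
  pose proof (Rle_0_sqr (px x)); pose proof (Rle_0_sqr (py x)); pose proof (Rle_0_sqr (pz x)).
  unfold Rsqr in *. apply eq3; unfold zero3; simpl; apply Z; simpl in *; lra.
Qed.

Lemma norm3_pos x : x <> zero3 -> 0 < norm3 x.
Proof. intros. unfold norm3. apply sqrt_lt_R0. apply dot_pos_nz; auto. Qed.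

Lemma unit_dot c x : c = norm3 x -> 0 < c -> dot3 (scal3 (/ c) x) (scal3 (/ c) x) = 1.
Proof.
  intros Hc Hp. transitivity (/ c * / c * dot3 x x). s3; ring.
  rewrite <- norm3_sq, <- Hc. field. lra.
Qed.

Theorem lemma4p4 :
  exists L' : R, 1 < L' /\
    forall (M : R3 -> Prop), C11_surface M ->
    forall p0 : R3, H_regular M p0 ->
    exists eps : R, 0 < eps /\
    exists G : R * R -> R3,
      (forall a, in_square eps a -> M (G a)) /\
      bi_lipschitz_on_square L' eps G /\
      G (0, 0) = p0 /\
      (forall v, - eps <= v <= eps ->
         horizontal_curve (- eps) eps (fun u => G (u, v))).
Proof.
  exists 2. split; [lra|].
  intros M HC p0 [HM0 Hnc].
  destruct (HC p0 HM0) as [r0 [Hr0 [f [g [Hfg [[Kg HKg] HMf]]]]]].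
  assert (Hball : forall q, d1 q p0 < r0 -> dist3 q p0 < r0) by (intros q Hq; pose proof (dist3_le_d1 q p0); lra).
  assert (Hgrad : forall q, d1 q p0 < r0 -> has_gradient f q (g q)) by (intros q Hq; apply Hfg; auto).
  assert (HMf' : forall q, d1 q p0 < r0 -> (M q <-> f q = 0)) by (intros q Hq; apply HMf; auto).
  pose proof (LB_g p0 r0 g Kg Hr0 HKg) as HgLB.
  set (Kg' := 2 * Rabs Kg) in *. set (Bg' := n1 (g p0) + 2 * Rabs Kg * r0) in *.
  assert (Hg0 : g p0 <> zero3).
  { destruct (Hfg p0) as [_ H]. rewrite dist3_refl; auto. exact H. }
  assert (HW0 : cross (g p0) (nf p0) <> zero3).
  { intro H. apply Hnc. apply (char_of_par M p0 r0 f g Kg' Bg'); auto. }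
  assert (Hf0 : f p0 = 0) by (apply HMf'; auto; rewrite d1_refl; auto).
  set (W0 := cross (g p0) (nf p0)) in *.
  set (V0 := cross (g p0) W0).
  assert (HV0 : V0 <> zero3).
  { intro H. pose proof (lagrange (g p0) W0). fold V0 in H0. rewrite H in H0.
    assert (dot3 (g p0) W0 = 0) by (unfold W0; s3; ring).
    rewrite H1 in H0. pose proof (dot_pos_nz _ Hg0). pose proof (dot_pos_nz _ HW0).
    assert (Z0 : dot3 zero3 zero3 = 0) by (s3; ring). rewrite Z0 in H0. nra. }
  pose proof (norm3_pos _ HW0) as HnW. pose proof (norm3_pos _ HV0) as HnV.
  set (nW := norm3 W0) in *. set (nV := norm3 V0) in *.
  set (Wf := fun q => scal3 (/ nW) (cross (g q) (nf q))).
  set (Vf := fun q => scal3 (/ nV) (cross (g q) (cross (g q) (nf q)))).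
  pose proof (LB_cross _ _ _ _ _ _ _ _ Hr0 HgLB (LB_nf p0 r0)) as LWr.
  pose proof (LB_scal _ _ (/ nW) _ _ _ LWr) as LW. fold Wf in LW.
  pose proof (LB_scal _ _ (/ nV) _ _ _ (LB_cross _ _ _ _ _ _ _ _ Hr0 HgLB LWr)) as LV. fold Vf in LV.
  match type of LW with LB _ _ _ ?K1 ?B1 => match type of LV with LB _ _ _ ?K2 ?B2 =>
    assert (HLW : LB p0 r0 Wf (Rabs K1 + Rabs K2 + 1) (Rabs B1 + Rabs B2 + 1)) by
      (apply (LB_mono _ _ _ _ _ _ _ LW); [pose proof (RRle_abs K1); pose proof (Rabs_pos K2)
        | pose proof (RRle_abs B1); pose proof (Rabs_pos B2)]; lra);
    assert (HLV : LB p0 r0 Vf (Rabs K1 + Rabs K2 + 1) (Rabs B1 + Rabs B2 + 1)) by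
      (apply (LB_mono _ _ _ _ _ _ _ LV); [pose proof (RRle_abs K2); pose proof (Rabs_pos K1)
        | pose proof (RRle_abs B2); pose proof (Rabs_pos B1)]; lra);
    assert (HK : 0 < Rabs K1 + Rabs K2 + 1) by (pose proof (Rabs_pos K1); pose proof (Rabs_pos K2); lra);
    assert (HB : 0 < Rabs B1 + Rabs B2 + 1) by (pose proof (Rabs_pos B1); pose proof (Rabs_pos B2); lra);
    set (K := Rabs K1 + Rabs K2 + 1) in *; set (B := Rabs B1 + Rabs B2 + 1) in * end end.
  clear LW LV LWr.
  assert (HoW : forall q, d1 q p0 < r0 -> dot3 (g q) (Wf q) = 0) by (intros; unfold Wf; s3; ring).
  assert (HoV : forall q, d1 q p0 < r0 -> dot3 (g q) (Vf q) = 0) by (intros; unfold Vf; s3; ring).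
  assert (Hhor : forall q, dot3 (nf q) (Wf q) = 0) by (intros; unfold Wf, nf; s3; ring).
  assert (Hgb : forall q, d1 q p0 < r0 -> n1 (g q) <= Bg') by apply HgLB.
  pose proof (TT_pos r0 K B Hr0 HK HB) as HT. pose proof (TT_B r0 K B HB) as HTB.
  set (T := TT r0 K B) in *.
  set (phV := FL r0 Vf K B). set (phW := FL r0 Wf K B).
  set (sig := fun v => phV p0 v).
  set (eps := Rmin (T / 2) (/ (20 * K * B))).
  assert (He : 0 < eps) by (apply Rmin_pos; [lra| apply Rinv_0_lt_compat; nra]).
  assert (HeT : eps <= T / 2) by apply Rmin_l.
  assert (HeKB : 5 * K * B * eps <= / 4).
  { assert (eps <= / (20 * K * B)) by apply Rmin_r.
    assert (0 < K * B) by nra.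
    apply Rmult_le_compat_l with (r := 20 * K * B) in H; [|lra].
    rewrite Rinv_r in H by lra. lra. }
  assert (Hp0 : d1 p0 p0 < r0 / 2) by (rewrite d1_refl; lra).
  assert (Hsig : forall v, Rabs v <= eps -> d1 (sig v) p0 <= B * eps /\ d1 (sig v) p0 < r0 / 2).
  { intros v Hv. pose proof (FL_q p0 r0 Vf K B Hr0 HK HB HLV p0 v Hp0 ltac:(fold T; lra)).
    fold phV sig in H. assert (B * Rabs v <= B * eps) by (apply Rmult_le_compat_l; lra).
    assert (B * eps <= B * (T / 2)) by (apply Rmult_le_compat_l; lra). unfold sig; split; lra. }
  exists eps. split; auto.
  exists (fun a => phW (sig (snd a)) (fst a)).
  split; [|split; [|split]].
  -
    intros [u v] Ha. unfold in_square in Ha; simpl in *.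
    assert (Hu : Rabs u <= eps) by absr. assert (Hv : Rabs v <= eps) by absr.
    destruct (Hsig v Hv) as [_ Hs].
    apply HMf'. apply (FL_ball p0 r0 Wf K B); auto. fold T; lra.
    unfold phW. rewrite (level p0 r0 Wf K B Hr0 HK HB HLW f g Bg' Hgrad Hgb HoW (sig v) u Hs ltac:(fold T; lra)).
    unfold sig, phV. rewrite (level p0 r0 Vf K B Hr0 HK HB HLV f g Bg' Hgrad Hgb HoV p0 v Hp0 ltac:(fold T; lra)).
    auto.
  -
    assert (HW1 : dot3 (Wf p0) (Wf p0) = 1) by (apply unit_dot; auto).
    assert (HV1 : dot3 (Vf p0) (Vf p0) = 1) by (apply unit_dot; auto).
    assert (HWV : dot3 (Wf p0) (Vf p0) = 0) by (unfold Wf, Vf; s3; ring).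
    apply (bilip_abs sig phW Vf Wf K B eps (Wf p0) (Vf p0)); try lra; auto.
    + intros u v v' Hu Hv Hv'. apply (FL_dep p0 r0 Wf K B); auto; try apply Hsig; auto. fold T; lra.
    + intros v v' Hv Hv'. apply (FL_lip p0 r0 Vf K B); auto; fold T; lra.
    + intros v v' Hv Hv'. apply (FL_quad p0 r0 Vf K B); auto; fold T; lra.
    + intros v' Hv'. destruct (Hsig v' Hv') as [H1 H2].
      eapply Rle_trans. apply HLV; lra. rewrite Rmult_assoc. apply Rmult_le_compat_l; lra.
    + intros u u' v' Hu Hu' Hv'. apply (FL_quad p0 r0 Wf K B); auto; try apply Hsig; auto; fold T; lra.
    + intros u' v' Hu' Hv'. destruct (Hsig v' Hv') as [H1 H2].
      pose proof (FL_q p0 r0 Wf K B Hr0 HK HB HLW (sig v') u' H2 ltac:(fold T; lra)).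
      fold phW in H.
      assert (HB3 : d1 (phW (sig v') u') p0 <= 2 * B * eps).
      { pose proof (d1_tri (phW (sig v') u') (sig v') p0).
        assert (B * Rabs u' <= B * eps) by (apply Rmult_le_compat_l; lra). lra. }
      eapply Rle_trans. apply HLW. pose proof (B * eps <= B * (T / 2)). nra. lra.
      replace (2 * K * B * eps) with (K * (2 * B * eps)) by ring. apply Rmult_le_compat_l; lra.
  -
    simpl. unfold sig, phV. rewrite (FL_0 p0 r0 Vf K B); auto. unfold phW. rewrite (FL_0 p0 r0 Wf K B); auto.
  -
    intros v Hv. assert (Hv' : Rabs v <= eps) by absr. destruct (Hsig v Hv') as [_ Hs].
    split.
    + apply abs_cont_lip with B; auto. intros s t Hs1 Ht1. simpl.
      eapply Rle_trans. apply dist3_le_d1. apply (FL_lip p0 r0 Wf K B); auto; fold T; absr.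
    + apply null_empty. intros t [Ht Hn]. apply Hn. simpl.
      assert (Ht' : Rabs t < T) by absr.
      exists (px (Wf (phW (sig v) t))), (py (Wf (phW (sig v) t))), (pz (Wf (phW (sig v) t))).
      split; [apply (FL_dx p0 r0 Wf K B); auto|].
      split; [apply (FL_dy p0 r0 Wf K B); auto|].
      split; [apply (FL_dz p0 r0 Wf K B); auto|].
      pose proof (Hhor (phW (sig v) t)) as Hh. unfold nf, dot3 in Hh. simpl in Hh. simpl. lra.
Qed.
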